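(* Let $\Gamma(t)$ be a differentiable motion of nondegenerate oriented m-triangles with constant angular momentum $\mathbf\Omega$, and let $\mathfrak F(t)=(\mathbf u_1(t),\mathbf u_2(t),\mathbf n(t))$ be a continuously varying moving eigenframe. Then the functions $$g_1=\mathbf\Omega\cdot\mathbf u_1,\quad g_2=\mathbf\Omega\cdot\mathbf u_2,\quad g_3=\mathbf\Omega\cdot\mathbf n$$ satisfy $$\dot g_1=g_2\Big[\Big(\frac1{\lambda_3}-\frac1{\lambda_2}\Big)g_3+\frac12\dot\theta\cos\varphi\Big],\quad \dot g_2=g_1\Big[\Big(\frac1{\lambda_1}-\frac1{\lambda_3}\Big)g_3-\frac12\dot\theta\cos\varphi\Big],\quad \dot g_3=g_1g_2\Big(\frac1{\lambda_2}-\frac1{\lambda_1}\Big),$$ where $\lambda_1(t),\lambda_2(t),\lambda_3(t)$ are the eigenvalues of the inertia tensor of $\Gamma(t)$ associated with $\mathbf u_1,\mathbf u_2,\mathbf n$, and these depend solely on the moduli curve $\bar\Gamma(t)=(\rho(t),\varphi(t),\theta(t))$.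
   Context: Masses $m_1,m_2,m_3>0$, $m_1+m_2+m_3=1$. An oriented m-triangle is $(\mathbf X,\mathbf n)$, $\mathbf X=(\mathbf a_1,\mathbf a_2,\mathbf a_3)$, $\mathbf a_i\in\mathbb R^3$, $\sum m_i\mathbf a_i=0$, $\mathbf n$ a unit vector perpendicular to the $\mathbf a_i$; nondegenerate means the $\mathbf a_i$ span a plane. Angular momentum: $\mathbf\Omega=\sum m_i\mathbf a_i\times\dot{\mathbf a}_i$. Inertia tensor: $B_{\mathbf X}(\mathbf u,\mathbf v)=\sum m_j(\mathbf u\times\mathbf a_j)\cdot(\mathbf v\times\mathbf a_j)$. An eigenframe is a positive orthonormal frame $(\mathbf u_1,\mathbf u_2,\mathbf n)$ with $\mathbf u_1,\mathbf u_2$ in the plane of the triangle, $\mathbf u_1\times\mathbf u_2=\mathbf n$, consisting of eigenvectors of $B_{\mathbf X}$; $\lambda_i=B_{\mathbf X}(\mathbf u_i,\mathbf u_i)$ for $i=1,2$ and $\lambda_3=B_{\mathbf X}(\mathbf n,\mathbf n)=I=\sum m_i|\mathbf a_i|^2=\rho^2$; one has $\{\lambda_1,\lambda_2\}=\frac I2(1\pm\sin\varphi)$. Here $(\varphi,\theta)$ are spherical coordinates on the shape space (oriented m-triangles of size $I=1$ modulo rotation, a round sphere with the kinematic metric $\frac14(d\varphi^2+\sin^2\varphi\,d\theta^2)$): $\varphi$ is the colatitude measured from the north pole, which is the shape of the positively oriented m-triangle with $I_j=m_j|\mathbf a_j|^2=(1-m_j)/2$, and $\theta$ is the longitude, increasing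 in the positive direction of the equator (collinear shapes) as oriented by the northern hemisphere of positively oriented shapes. The moduli curve $\bar\Gamma$ is the image of $\Gamma$ modulo rotations, described by $(\rho,\varphi,\theta)$. *)

(* Defs.v *)
From Stdlib Require Import Reals.
From Coquelicot Require Import Coquelicot.
Open Scope R_scope.

Record vec3 := mkV { vx : R; vy : R; vz : R }.

Definition vzero : vec3 := mkV 0 0 0.
Definition vadd (u v : vec3) : vec3 := mkV (vx u + vx v) (vy u + vy v) (vz u + vz v).
Definition vsub (u v : vec3) : vec3 := mkV (vx u - vx v) (vy u - vy v) (vz u - vz v).
Definition vscale (c : R) (u : vec3) : vec3 := mkV (c * vx u) (c * vy u) (c * vz u).
Definition dot (u v : vec3) : R := vx u * vx v + vy u * vy v + vz u * vz v.
Definition cross (u v : vec3) : vec3 :=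
  mkV (vy u * vz v - vz u * vy v) (vz u * vx v - vx u * vz v) (vx u * vy v - vy u * vx v).

Definition vderiv (f : R -> vec3) (t : R) : vec3 :=
  mkV (Derive (fun s => vx (f s)) t) (Derive (fun s => vy (f s)) t)
      (Derive (fun s => vz (f s)) t).
Definition vdifferentiable_at (f : R -> vec3) (t : R) : Prop :=
  ex_derive (fun s => vx (f s)) t /\ ex_derive (fun s => vy (f s)) t /\
  ex_derive (fun s => vz (f s)) t.
Definition vcontinuous_at (f : R -> vec3) (t : R) : Prop :=
  continuous (fun s => vx (f s)) t /\ continuous (fun s => vy (f s)) t /\
  continuous (fun s => vz (f s)) t.

Definition oriented_mtriangle (m1 m2 m3 : R) (a1 a2 a3 n : vec3) : Prop :=
  vadd (vadd (vscale m1 a1) (vscale m2 a2)) (vscale m3 a3) = vzero /\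
  dot n n = 1 /\ dot n a1 = 0 /\ dot n a2 = 0 /\ dot n a3 = 0.

(* nondegenerate: the a_i span a plane (their linear span has dimension >= 2,
   hence exactly 2 since they are all perpendicular to n) *)
Definition nondegenerate (a1 a2 a3 : vec3) : Prop :=
  cross a1 a2 <> vzero \/ cross a2 a3 <> vzero \/ cross a1 a3 <> vzero.

Definition inertia (m1 m2 m3 : R) (a1 a2 a3 : vec3) (u v : vec3) : R :=
  m1 * dot (cross u a1) (cross v a1) + m2 * dot (cross u a2) (cross v a2)
  + m3 * dot (cross u a3) (cross v a3).

Definition moment (m1 m2 m3 : R) (a1 a2 a3 : vec3) : R :=
  m1 * dot a1 a1 + m2 * dot a2 a2 + m3 * dot a3 a3.

Definition ang_mom (m1 m2 m3 : R) (a1 a2 a3 : R -> vec3) (t : R) : vec3 :=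
  vadd (vadd (vscale m1 (cross (a1 t) (vderiv a1 t)))
             (vscale m2 (cross (a2 t) (vderiv a2 t))))
       (vscale m3 (cross (a3 t) (vderiv a3 t))).

(* u is an eigenvector of the symmetric bilinear form B_X, with eigenvalue B_X(u,u)
   (u is taken of unit length in an eigenframe) *)
Definition B_eigenvector (m1 m2 m3 : R) (a1 a2 a3 u : vec3) : Prop :=
  forall v, inertia m1 m2 m3 a1 a2 a3 u v = inertia m1 m2 m3 a1 a2 a3 u u * dot u v.

Definition is_eigenframe (m1 m2 m3 : R) (a1 a2 a3 u1 u2 n : vec3) : Prop :=
  dot u1 u1 = 1 /\ dot u2 u2 = 1 /\ dot u1 u2 = 0 /\
  dot u1 n = 0 /\ dot u2 n = 0 /\ cross u1 u2 = n /\
  B_eigenvector m1 m2 m3 a1 a2 a3 u1 /\ B_eigenvector m1 m2 m3 a1 a2 a3 u2 /\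
  B_eigenvector m1 m2 m3 a1 a2 a3 n.

(* Mass-weighted Jacobi vectors zeta1 = sqrt(mu1) (a2 - a1),
   zeta2 = sqrt(mu2) (a3 - (m1 a1 + m2 a2)/(m1+m2)),
   mu1 = m1 m2/(m1+m2), mu2 = m3 (m1+m2); then I = |zeta1|^2 + |zeta2|^2. *)
Definition jacobi1 (m1 m2 m3 : R) (a1 a2 a3 : vec3) : vec3 :=
  vscale (sqrt (m1 * m2 / (m1 + m2))) (vsub a2 a1).
Definition jacobi2 (m1 m2 m3 : R) (a1 a2 a3 : vec3) : vec3 :=
  vscale (sqrt (m3 * (m1 + m2)))
         (vsub a3 (vscale (/ (m1 + m2)) (vadd (vscale m1 a1) (vscale m2 a2)))).

(* Hopf map: the shape of the oriented m-triangle is the point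
   (X, Y, Z)/I of the unit sphere, X^2 + Y^2 + Z^2 = I^2, where
   X = |zeta1|^2 - |zeta2|^2, Y = 2 zeta1.zeta2, Z = 2 (zeta1 x zeta2).n.
   Z > 0 exactly for positively oriented triangles, and the north pole
   (X = Y = 0, Z = I) is the positively oriented shape with
   m_j |a_j|^2 = (1 - m_j)/2 I.  Spherical coordinates:
   X = I sin(phi) cos(theta), Y = I sin(phi) sin(theta), Z = I cos(phi). *)
Definition shapeX (m1 m2 m3 : R) (a1 a2 a3 n : vec3) : R :=
  dot (jacobi1 m1 m2 m3 a1 a2 a3) (jacobi1 m1 m2 m3 a1 a2 a3)
  - dot (jacobi2 m1 m2 m3 a1 a2 a3) (jacobi2 m1 m2 m3 a1 a2 a3).
Definition shapeY (m1 m2 m3 : R) (a1 a2 a3 n : vec3) : R :=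
  2 * dot (jacobi1 m1 m2 m3 a1 a2 a3) (jacobi2 m1 m2 m3 a1 a2 a3).
Definition shapeZ (m1 m2 m3 : R) (a1 a2 a3 n : vec3) : R :=
  2 * dot (cross (jacobi1 m1 m2 m3 a1 a2 a3) (jacobi2 m1 m2 m3 a1 a2 a3)) n.

Definition colatitude (m1 m2 m3 : R) (a1 a2 a3 n : vec3) : R :=
  acos (shapeZ m1 m2 m3 a1 a2 a3 n / moment m1 m2 m3 a1 a2 a3).
Definition size_rho (m1 m2 m3 : R) (a1 a2 a3 : vec3) : R :=
  sqrt (moment m1 m2 m3 a1 a2 a3).

Definition is_longitude_at (m1 m2 m3 : R) (a1 a2 a3 n : R -> vec3)
    (theta : R -> R) (t : R) : Prop :=
  let I := moment m1 m2 m3 (a1 t) (a2 t) (a3 t) in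
  let phi := colatitude m1 m2 m3 (a1 t) (a2 t) (a3 t) (n t) in
  shapeX m1 m2 m3 (a1 t) (a2 t) (a3 t) (n t) = I * sin phi * cos (theta t) /\
  shapeY m1 m2 m3 (a1 t) (a2 t) (a3 t) (n t) = I * sin phi * sin (theta t).

(* Main.v *)
Require Import Defs.
From Stdlib Require Import Reals Lra Psatz.
From Coquelicot Require Import Coquelicot.
Open Scope R_scope.

Ltac vsimpl := unfold dot, cross, vadd, vsub, vscale, vzero in *; simpl in *.

Lemma dot_comm u v : dot u v = dot v u. Proof. vsimpl; ring. Qed.
Lemma dot_vadd_l u v w : dot (vadd u v) w = dot u w + dot v w. Proof. vsimpl; ring. Qed.
Lemma dot_vsub_l u v w : dot (vsub u v) w = dot u w - dot v w. Proof. vsimpl; ring. Qed.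
Lemma dot_vscale_l c u w : dot (vscale c u) w = c * dot u w. Proof. vsimpl; ring. Qed.
Lemma dot_vadd_r u v w : dot w (vadd u v) = dot w u + dot w v. Proof. vsimpl; ring. Qed.
Lemma dot_vsub_r u v w : dot w (vsub u v) = dot w u - dot w v. Proof. vsimpl; ring. Qed.
Lemma dot_vscale_r c u w : dot w (vscale c u) = c * dot w u. Proof. vsimpl; ring. Qed.
Lemma dot_vzero_l w : dot vzero w = 0. Proof. vsimpl; ring. Qed.

Lemma lagrange v w p q :
  dot (cross v w) (cross p q) = dot v p * dot w q - dot v q * dot w p.
Proof. destruct v, w, p, q; vsimpl; ring. Qed.

Lemma bac_cab a b c : cross a (cross b c) = vsub (vscale (dot a c) b) (vscale (dot a b) c).
Proof. destruct a, b, c; vsimpl; f_equal; ring. Qed.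

Lemma cross_anti a b : cross a b = vscale (-1) (cross b a).
Proof. destruct a, b; vsimpl; f_equal; ring. Qed.

Lemma gram v w p q :
  dot v (cross p q) * dot w (cross p q) =
  dot v w * (dot p p * dot q q - dot p q * dot p q)
  - dot v p * (dot p w * dot q q - dot p q * dot q w)
  + dot v q * (dot p w * dot p q - dot p p * dot q w).
Proof. destruct v, w, p, q; vsimpl; ring. Qed.

Lemma dot_self_zero w : dot w w = 0 -> w = vzero.
Proof. destruct w as [a b c]; vsimpl; intros H.
  assert (a = 0) by nra. assert (b = 0) by nra. assert (c = 0) by nra. subst; reflexivity. Qed.

Lemma dot_self_nonneg w : 0 <= dot w w.
Proof. destruct w as [a b c]; vsimpl; nra. Qed.

Definition frameP (e1 e2 e3 : vec3) : Prop :=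
  dot e1 e1 = 1 /\ dot e2 e2 = 1 /\ dot e3 e3 = 1 /\
  dot e1 e2 = 0 /\ dot e1 e3 = 0 /\ dot e2 e3 = 0 /\ cross e1 e2 = e3.

Lemma frame_cross23 e1 e2 e3 : frameP e1 e2 e3 -> cross e2 e3 = e1.
Proof. intros (H1&H2&H3&H12&H13&H23&C). rewrite <- C, bac_cab.
  rewrite (dot_comm e2 e1), H12, H2. destruct e1, e2; vsimpl; f_equal; ring. Qed.

Lemma frame_cross31 e1 e2 e3 : frameP e1 e2 e3 -> cross e3 e1 = e2.
Proof. intros (H1&H2&H3&H12&H13&H23&C). rewrite <- C, cross_anti, bac_cab.
  rewrite H12, H1. destruct e1, e2; vsimpl; f_equal; ring. Qed.

Lemma frame_dot e1 e2 e3 v w : frameP e1 e2 e3 ->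
  dot v w = dot v e1 * dot w e1 + dot v e2 * dot w e2 + dot v e3 * dot w e3.
Proof. intros F. pose proof F as (H1&H2&H3&H12&H13&H23&C).
  pose proof (gram v w e1 e2) as G. rewrite C in G.
  rewrite H1, H2, H12 in G. rewrite (dot_comm e1 w), (dot_comm e2 w) in G.
  nra. Qed.

Lemma frame_zero e1 e2 e3 w : frameP e1 e2 e3 ->
  dot w e1 = 0 -> dot w e2 = 0 -> dot w e3 = 0 -> w = vzero.
Proof. intros F A B C. apply dot_self_zero. rewrite (frame_dot e1 e2 e3 w w F), A, B, C. ring. Qed.

Lemma frame_ext e1 e2 e3 v w : frameP e1 e2 e3 ->
  dot v e1 = dot w e1 -> dot v e2 = dot w e2 -> dot v e3 = dot w e3 -> v = w.
Proof. intros F A B C. assert (vsub v w = vzero).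
  apply (frame_zero e1 e2 e3); auto; rewrite dot_vsub_l; lra.
  destruct v, w; vsimpl; injection H; intros; f_equal; lra. Qed.

Lemma frame_cross1 e1 e2 e3 v w : frameP e1 e2 e3 ->
  dot (cross v w) e1 = dot v e2 * dot w e3 - dot v e3 * dot w e2.
Proof. intros F. rewrite <- (frame_cross23 _ _ _ F) at 1. apply lagrange. Qed.
Lemma frame_cross2 e1 e2 e3 v w : frameP e1 e2 e3 ->
  dot (cross v w) e2 = dot v e3 * dot w e1 - dot v e1 * dot w e3.
Proof. intros F. rewrite <- (frame_cross31 _ _ _ F) at 1. apply lagrange. Qed.
Lemma frame_cross3 e1 e2 e3 v w : frameP e1 e2 e3 ->
  dot (cross v w) e3 = dot v e1 * dot w e2 - dot v e2 * dot w e1.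
Proof. intros F. pose proof F as (_&_&_&_&_&_&C). rewrite <- C at 1. apply lagrange. Qed.

Lemma inertia_eq m1 m2 m3 a1 a2 a3 u v :
  inertia m1 m2 m3 a1 a2 a3 u v =
  m1 * (dot u v * dot a1 a1 - dot u a1 * dot v a1) +
  m2 * (dot u v * dot a2 a2 - dot u a2 * dot v a2) +
  m3 * (dot u v * dot a3 a3 - dot u a3 * dot v a3).
Proof. unfold inertia. rewrite !lagrange. rewrite (dot_comm a1 v), (dot_comm a2 v), (dot_comm a3 v). ring. Qed.
Lemma is_derive_eq (f : R -> R) t l l' : is_derive f t l -> l = l' -> is_derive f t l'.
Proof. intros H ->; exact H. Qed.
Lemma dRmult (f g : R -> R) t df dg : is_derive f t df -> is_derive g t dg ->
  is_derive (fun s => f s * g s) t (df * g t + f t * dg).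
Proof. intros. apply (is_derive_mult f g t df dg); auto. intros; apply Rmult_comm. Qed.
Lemma dRplus (f g : R -> R) t df dg : is_derive f t df -> is_derive g t dg ->
  is_derive (fun s => f s + g s) t (df + dg).
Proof. intros. apply (is_derive_plus f g t df dg); auto. Qed.
Lemma dRminus (f g : R -> R) t df dg : is_derive f t df -> is_derive g t dg ->
  is_derive (fun s => f s - g s) t (df - dg).
Proof. intros. apply (is_derive_minus f g t df dg); auto. Qed.
Lemma dRconst (c : R) t : is_derive (fun _ => c) t 0.
Proof. apply (is_derive_const c t). Qed.
Lemma dRscal (c : R) (f : R -> R) t df : is_derive f t df -> is_derive (fun s => c * f s) t (c * df).
Proof. apply is_derive_scal. Qed.

Definition vis_derive (f : R -> vec3) t (v : vec3) : Prop :=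
  is_derive (fun s => vx (f s)) t (vx v) /\ is_derive (fun s => vy (f s)) t (vy v) /\
  is_derive (fun s => vz (f s)) t (vz v).

Lemma vdiff_vis f t : vdifferentiable_at f t -> vis_derive f t (vderiv f t).
Proof. intros (A&B&C); split; [|split]; apply Derive_correct; auto. Qed.
Lemma vis_vdiff f t v : vis_derive f t v -> vdifferentiable_at f t /\ vderiv f t = v.
Proof. intros (A&B&C); split. split; [|split]; eexists; eauto.
  unfold vderiv. destruct v; simpl in *. f_equal; apply is_derive_unique; auto. Qed.
Lemma vis_const c t : vis_derive (fun _ => c) t vzero.
Proof. split; [|split]; apply dRconst. Qed.
Lemma vis_add f g t v w : vis_derive f t v -> vis_derive g t w ->
  vis_derive (fun s => vadd (f s) (g s)) t (vadd v w).
Proof. intros (A&B&C) (D&E&F); split; [|split]; simpl; apply dRplus; auto. Qed.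
Lemma vis_sub f g t v w : vis_derive f t v -> vis_derive g t w ->
  vis_derive (fun s => vsub (f s) (g s)) t (vsub v w).
Proof. intros (A&B&C) (D&E&F); split; [|split]; simpl; apply dRminus; auto. Qed.
Lemma vis_scale c f t v : vis_derive f t v -> vis_derive (fun s => vscale c (f s)) t (vscale c v).
Proof. intros (A&B&C); split; [|split]; simpl; apply dRscal; auto. Qed.
Lemma vis_scalef (h : R -> R) f t dh v : is_derive h t dh -> vis_derive f t v ->
  vis_derive (fun s => vscale (h s) (f s)) t (vadd (vscale dh (f t)) (vscale (h t) v)).
Proof. intros H (A&B&C); split; [|split]; simpl; apply dRmult; auto. Qed.
Lemma vis_cross f g t v w : vis_derive f t v -> vis_derive g t w ->
  vis_derive (fun s => cross (f s) (g s)) t (vadd (cross v (g t)) (cross (f t) w)).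
Proof. intros (A&B&C) (D&E&F); split; [|split]; simpl; (eapply is_derive_eq; [apply dRminus; apply dRmult; eauto|]); simpl. all: ring. Qed.


Lemma dot_is_derive f g t v w : vis_derive f t v -> vis_derive g t w ->
  is_derive (fun s => dot (f s) (g s)) t (dot v (g t) + dot (f t) w).
Proof. intros (A&B&C) (D&E&F); unfold dot. eapply is_derive_eq. apply dRplus; [apply dRplus|]; apply dRmult; eauto. simpl; ring. Qed.


Lemma vis_ext_loc f g t v : locally t (fun s => f s = g s) -> vis_derive f t v -> vis_derive g t v.
Proof. intros L (A&B&C); split; [|split]; (eapply is_derive_ext_loc; [|eauto]);
  (eapply filter_imp; [|exact L]); intros s ->; reflexivity. Qed.

Lemma vdiff_cont f t : vdifferentiable_at f t -> vcontinuous_at f t.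
Proof. intros (A&B&C); split; [|split]; apply (ex_derive_continuous (K:=R_AbsRing) (V:=R_NormedModule)); auto. Qed.
Lemma cRmult (f g : R -> R) t : continuous f t -> continuous g t -> continuous (fun s => f s * g s) t.
Proof. intros; apply (continuous_mult f g); auto. Qed.
Lemma cRplus (f g : R -> R) t : continuous f t -> continuous g t -> continuous (fun s => f s + g s) t.
Proof. intros; apply (continuous_plus f g); auto. Qed.
Lemma cRminus (f g : R -> R) t : continuous f t -> continuous g t -> continuous (fun s => f s - g s) t.
Proof. intros; apply (continuous_minus f g); auto. Qed.
Lemma cRconst (c : R) (t : R) : continuous (fun _ : R => c) t.
Proof. apply continuous_const. Qed.
Lemma cdot f g t : vcontinuous_at f t -> vcontinuous_at g t -> continuous (fun s => dot (f s) (g s)) t.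
Proof. intros (A&B&C) (D&E&F); unfold dot; repeat apply cRplus; apply cRmult; auto. Qed.
Lemma vccross f g t : vcontinuous_at f t -> vcontinuous_at g t -> vcontinuous_at (fun s => cross (f s) (g s)) t.
Proof. intros (A&B&C) (D&E&F); split; [|split]; simpl; apply cRminus; apply cRmult; auto. Qed.

Lemma cont_pos_loc (h : R -> R) t : continuous h t -> 0 < h t -> locally t (fun s => 0 < h s).
Proof. intros C P. apply C. apply (locally_open (fun u => 0 < u)); auto. apply open_gt. Qed.
Lemma cont_neg_loc (h : R -> R) t : continuous h t -> h t < 0 -> locally t (fun s => h s < 0).
Proof. intros C P. apply (C (fun u => u < 0)). apply (locally_open (fun u => u < 0)); auto. apply open_lt. Qed.
Lemma interval_loc ta tb t : ta < t < tb -> locally t (fun s => ta < s < tb).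
Proof. intros H. apply (locally_open (fun s => ta < s < tb)); auto.
  apply open_and; [apply open_gt|apply open_lt]. Qed.

Lemma cross_zero_par e u : dot u u = 1 -> cross e u = vzero -> e = vscale (dot u e) u.
Proof. intros H1 H2. pose proof (bac_cab u e u) as B. rewrite H2, H1 in B.
  destruct e, u; vsimpl. injection B; intros; f_equal; lra. Qed.

Lemma L_norm (e u : R -> vec3) t :
  vdifferentiable_at e t -> vcontinuous_at u t ->
  locally t (fun s => dot (u s) (u s) = 1 /\ cross (e s) (u s) = vzero) ->
  e t <> vzero -> vdifferentiable_at u t.
Proof.
  intros De Cu L Ne.
  pose proof (vdiff_vis _ _ De) as Ve.
  assert (Ce := vdiff_cont _ _ De).
  set (h := fun s => dot (u s) (e s)).
  assert (Ch : continuous h t) by (apply cdot; auto).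
  assert (Par : locally t (fun s => e s = vscale (h s) (u s))).
  { eapply filter_imp; [|exact L]. intros s [A B]. apply cross_zero_par; auto. }
  assert (Pt : e t = vscale (h t) (u t)) by (apply locally_singleton in Par; exact Par).
  assert (Ut : dot (u t) (u t) = 1) by (apply locally_singleton in L; tauto).
  assert (EE : dot (e t) (e t) = h t * h t).
  { rewrite Pt, dot_vscale_l, dot_vscale_r, Ut. ring. }
  assert (Hne : h t <> 0).
  { intro Z. apply Ne. rewrite Pt, Z. destruct (u t); vsimpl; f_equal; ring. }
  assert (Pos : 0 < dot (e t) (e t)) by (rewrite EE; nra).
  pose proof (dot_is_derive _ _ _ _ _ Ve Ve) as Dee.
  assert (Dk : is_derive (fun s => / sqrt (dot (e s) (e s))) t
      (- ((dot (vderiv e t) (e t) + dot (e t) (vderiv e t)) / (2 * sqrt (dot (e t) (e t)))) / (sqrt (dot (e t) (e t)))^2)).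
  { apply (is_derive_inv (fun s => sqrt (dot (e s) (e s)))).
    apply (is_derive_sqrt (fun s => dot (e s) (e s))); auto.
    apply Rgt_not_eq, sqrt_lt_R0; auto. }
  assert (Key : forall sg, (sg = 1 \/ sg = -1) ->
     locally t (fun s => u s = vscale (sg * / sqrt (dot (e s) (e s))) (e s)) ->
     vdifferentiable_at u t).
  { intros sg Hsg Lo. apply (vis_vdiff u t (vadd (vscale (sg * (- ((dot (vderiv e t) (e t) + dot (e t) (vderiv e t)) / (2 * sqrt (dot (e t) (e t)))) / (sqrt (dot (e t) (e t)))^2)) (e t)) (vscale (sg * / sqrt (dot (e t) (e t))) (vderiv e t)))).
    eapply vis_ext_loc.
    { eapply filter_imp; [|exact Lo]. intros s E. symmetry. exact E. }
    apply (vis_scalef (fun s => sg * / sqrt (dot (e s) (e s))) e t); auto. apply (dRscal sg (fun s => / sqrt (dot (e s) (e s)))). exact Dk. }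
  assert (Gen : forall s, dot (u s) (u s) = 1 -> e s = vscale (h s) (u s) -> h s <> 0 ->
            u s = vscale (/ h s) (e s) /\ dot (e s) (e s) = h s * h s).
  { intros s U1 Es Hs. split.
    - rewrite Es. destruct (u s); vsimpl; f_equal; field; auto.
    - rewrite Es, dot_vscale_l, dot_vscale_r, U1. ring. }
  destruct (Rlt_or_le 0 (h t)) as [Hp|Hn].
  - apply (Key 1); auto.
    pose proof (cont_pos_loc h t Ch Hp) as Lp.
    eapply filter_imp; [|exact (filter_and _ _ (filter_and _ _ L Par) Lp)].
    intros s [[[U1 _] Es] Hs]. destruct (Gen s U1 Es (Rgt_not_eq _ _ Hs)) as [G1 G2].
    rewrite G1, G2, sqrt_square by lra. f_equal. field. lra.
  - assert (Hn' : h t < 0) by lra.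
    apply (Key (-1)); auto.
    pose proof (cont_neg_loc h t Ch Hn') as Lp.
    eapply filter_imp; [|exact (filter_and _ _ (filter_and _ _ L Par) Lp)].
    intros s [[[U1 _] Es] Hs]. destruct (Gen s U1 Es (Rlt_not_eq _ _ Hs)) as [G1 G2].
    rewrite G1, G2.
    replace (h s * h s) with ((- h s) * (- h s)) by ring.
    rewrite sqrt_square by lra. f_equal. field. lra.
Qed.

Lemma key c d e f c1 d1 e1 f1 : c*d + e*f = 0 ->
  ((c*c+e*e)-(d*d+f*f))*(c*d1+c1*d+e*f1+e1*f)*((d*d+f*f)+(c*c+e*e)) =
  ((c*c+e*e)-(d*d+f*f))^2*(c*d1-d*c1+e*f1-f*e1)
  + /2*(2*(c*f-d*e))*((c*c+d*d-e*e-f*f)*(2*(c1*e+c*e1+d1*f+d*f1))-(2*(c*e+d*f))*(2*(c*c1+d*d1-e*e1-f*f1))).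
Proof. intros H.
  match goal with |- ?L = ?R => assert (E : L - R = ((2)*c*c*c*c1 + (2)*c*e*e*c1 + (-2)*d*d*d*d1 + (-2)*d*f*f*d1 + (2)*c*c*d*d1 + (-2)*c*d*d*c1 + (4)*c*d*e*f1 + (-4)*c*d*f*e1 + (2)*c*f*f*c1 + (-2)*d*e*e*d1 + (-2)*c*c*f*f1 + (-4)*d*e*f*c1 + (-2)*d*d*f*f1 + (2)*e*e*f*f1 + (-2)*f*f*f*f1 + (4)*c*e*f*d1 + (-2)*e*f*f*e1 + (2)*c*c*e*e1 + (2)*d*d*e*e1 + (2)*e*e*e*e1) * (c*d+e*f)) by (field) end.
  rewrite H, Rmult_0_r in E. lra. Qed.
Lemma key2 c d e f : c*d + e*f = 0 ->
  (c*c+d*d-e*e-f*f)^2 + (2*(c*e+d*f))^2 = ((c*c+e*e)-(d*d+f*f))^2.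
Proof. intros H. match goal with |- ?L = ?R => assert (E : L - R = (4*(c*d+e*f)) * (c*d+e*f)) by ring end.
  rewrite H in E. lra. Qed.


Lemma jac_bil m1 m2 m3 x1 x2 x3 y1 y2 y3 : 0<m1 -> 0<m2 -> 0<m3 -> m1+m2+m3=1 ->
  m1*x1+m2*x2+m3*x3 = 0 -> m1*y1+m2*y2+m3*y3 = 0 ->
  m1*x1*y1 + m2*x2*y2 + m3*x3*y3 =
  sqrt (m1*m2/(m1+m2)) * (x2-x1) * (sqrt (m1*m2/(m1+m2)) * (y2-y1)) +
  sqrt (m3*(m1+m2)) * (x3 - /(m1+m2) * (m1*x1+m2*x2)) *
  (sqrt (m3*(m1+m2)) * (y3 - /(m1+m2) * (m1*y1+m2*y2))).
Proof. intros H1 H2 H3 S X Y.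
  replace (sqrt (m1*m2/(m1+m2)) * (x2-x1) * (sqrt (m1*m2/(m1+m2)) * (y2-y1))) with
    ((sqrt (m1*m2/(m1+m2)) * sqrt (m1*m2/(m1+m2))) * (x2-x1) * (y2-y1)) by ring.
  replace (sqrt (m3*(m1+m2)) * (x3 - /(m1+m2) * (m1*x1+m2*x2)) *
    (sqrt (m3*(m1+m2)) * (y3 - /(m1+m2) * (m1*y1+m2*y2)))) with
    ((sqrt (m3*(m1+m2)) * sqrt (m3*(m1+m2))) * (x3 - /(m1+m2) * (m1*x1+m2*x2)) * (y3 - /(m1+m2) * (m1*y1+m2*y2))) by ring.
  rewrite !sqrt_sqrt.
  2: nra. 2: apply Rmult_le_pos; [|apply Rlt_le, Rinv_0_lt_compat]; nra.
  assert (x3 = -(m1*x1+m2*x2)/m3) by (apply Rmult_eq_reg_l with m3; [replace (m3 * (-(m1*x1+m2*x2)/m3)) with (-(m1*x1+m2*x2)) by (field; lra); lra | lra]).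
  assert (y3 = -(m1*y1+m2*y2)/m3) by (apply Rmult_eq_reg_l with m3; [replace (m3 * (-(m1*y1+m2*y2)/m3)) with (-(m1*y1+m2*y2)) by (field; lra); lra | lra]).
  subst x3 y3. replace m3 with (1 - m1 - m2) by lra. field. split; lra. Qed.

Lemma jdot1 m1 m2 m3 a1 a2 a3 v : dot (jacobi1 m1 m2 m3 a1 a2 a3) v =
  sqrt (m1*m2/(m1+m2)) * (dot a2 v - dot a1 v).
Proof. unfold jacobi1. rewrite dot_vscale_l, dot_vsub_l. reflexivity. Qed.
Lemma jdot2 m1 m2 m3 a1 a2 a3 v : dot (jacobi2 m1 m2 m3 a1 a2 a3) v =
  sqrt (m3*(m1+m2)) * (dot a3 v - /(m1+m2) * (m1 * dot a1 v + m2 * dot a2 v)).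
Proof. unfold jacobi2. rewrite dot_vscale_l, dot_vsub_l, dot_vscale_l, dot_vadd_l, !dot_vscale_l. reflexivity. Qed.

Lemma com_dot m1 m2 m3 a1 a2 a3 v :
  vadd (vadd (vscale m1 a1) (vscale m2 a2)) (vscale m3 a3) = vzero ->
  m1 * dot a1 v + m2 * dot a2 v + m3 * dot a3 v = 0.
Proof. intros H. rewrite <- (dot_vzero_l v), <- H, !dot_vadd_l, !dot_vscale_l. ring. Qed.

Lemma pw m1 m2 m3 a1 a2 a3 e1 e2 e3 :
  0<m1 -> 0<m2 -> 0<m3 -> m1+m2+m3=1 -> frameP e1 e2 e3 ->
  dot e3 a1 = 0 -> dot e3 a2 = 0 -> dot e3 a3 = 0 ->
  vadd (vadd (vscale m1 a1) (vscale m2 a2)) (vscale m3 a3) = vzero ->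
  m1 * (dot a1 e1 * dot a1 e2) + m2 * (dot a2 e1 * dot a2 e2) + m3 * (dot a3 e1 * dot a3 e2) = 0 ->
  let l1 := inertia m1 m2 m3 a1 a2 a3 e1 e1 in
  let l2 := inertia m1 m2 m3 a1 a2 a3 e2 e2 in
  let l3 := inertia m1 m2 m3 a1 a2 a3 e3 e3 in
  let I := moment m1 m2 m3 a1 a2 a3 in
  let X := shapeX m1 m2 m3 a1 a2 a3 e3 in
  let Y := shapeY m1 m2 m3 a1 a2 a3 e3 in
  let Z := shapeZ m1 m2 m3 a1 a2 a3 e3 in
  l3 = I /\ I = l1 + l2 /\ X^2 + Y^2 = (l2 - l1)^2 /\ X^2 + Y^2 + Z^2 = I^2 /\ 0 <= I /\
  l1 = m1 * dot a1 e2 ^ 2 + m2 * dot a2 e2 ^ 2 + m3 * dot a3 e2 ^ 2 /\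
  l2 = m1 * dot a1 e1 ^ 2 + m2 * dot a2 e1 ^ 2 + m3 * dot a3 e1 ^ 2.
Proof.
  intros H1 H2 H3 S F N1 N2 N3 C Sxy l1 l2 l3 I X Y Z.
  pose proof F as (F11&F22&F33&F12&F13&F23&Fc).
  assert (Da : forall a, dot e3 a = 0 -> dot a a = dot a e1 ^ 2 + dot a e2 ^ 2).
  { intros a Na. rewrite (frame_dot e1 e2 e3 a a F), (dot_comm a e3), Na. ring. }
  assert (Cx := com_dot _ _ _ _ _ _ e1 C). assert (Cy := com_dot _ _ _ _ _ _ e2 C).
  assert (Cn := com_dot _ _ _ _ _ _ e3 C).
  assert (El1 : l1 = m1 * dot a1 e2 ^ 2 + m2 * dot a2 e2 ^ 2 + m3 * dot a3 e2 ^ 2).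
  { subst l1; rewrite inertia_eq, F11, (Da a1 N1), (Da a2 N2), (Da a3 N3). rewrite !(dot_comm e1 a1), !(dot_comm e1 a2), !(dot_comm e1 a3). ring. }
  assert (El2 : l2 = m1 * dot a1 e1 ^ 2 + m2 * dot a2 e1 ^ 2 + m3 * dot a3 e1 ^ 2).
  { subst l2; rewrite inertia_eq, F22, (Da a1 N1), (Da a2 N2), (Da a3 N3), !(dot_comm e2). ring. }
  assert (El3 : l3 = I).
  { subst l3 I; unfold moment; rewrite inertia_eq, F33, N1, N2, N3. ring. }
  assert (EI : I = l1 + l2).
  { subst I; unfold moment; rewrite El1, El2, (Da a1 N1), (Da a2 N2), (Da a3 N3). ring. }
  set (s1 := sqrt (m1*m2/(m1+m2))). set (s2 := sqrt (m3*(m1+m2))).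
  set (c := dot (jacobi1 m1 m2 m3 a1 a2 a3) e1). set (d := dot (jacobi1 m1 m2 m3 a1 a2 a3) e2).
  set (e := dot (jacobi2 m1 m2 m3 a1 a2 a3) e1). set (f := dot (jacobi2 m1 m2 m3 a1 a2 a3) e2).
  assert (J1n : dot (jacobi1 m1 m2 m3 a1 a2 a3) e3 = 0).
  { rewrite jdot1, !(dot_comm _ e3), N1, N2. ring. }
  assert (J2n : dot (jacobi2 m1 m2 m3 a1 a2 a3) e3 = 0).
  { rewrite jdot2, !(dot_comm _ e3), N1, N2, N3. ring. }
  assert (EX : X = c*c+d*d-e*e-f*f).
  { subst X; unfold shapeX. set (J1 := jacobi1 m1 m2 m3 a1 a2 a3) in *. set (J2 := jacobi2 m1 m2 m3 a1 a2 a3) in *. rewrite (frame_dot e1 e2 e3 J1 J1 F), (frame_dot e1 e2 e3 J2 J2 F), J1n, J2n. subst c d e f. ring. }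
  assert (EY : Y = 2*(c*e+d*f)).
  { subst Y; unfold shapeY. rewrite (frame_dot e1 e2 e3 _ _ F), J1n, J2n. subst c d e f. ring. }
  assert (EZ : Z = 2*(c*f-d*e)).
  { subst Z; unfold shapeZ. rewrite (frame_cross3 e1 e2 e3 _ _ F). subst c d e f. ring. }
  assert (Ec : c = s1 * (dot a2 e1 - dot a1 e1)) by (subst c; rewrite jdot1; reflexivity).
  assert (Ed : d = s1 * (dot a2 e2 - dot a1 e2)) by (subst d; rewrite jdot1; reflexivity).
  assert (Ee : e = s2 * (dot a3 e1 - /(m1+m2) * (m1 * dot a1 e1 + m2 * dot a2 e1))) by (subst e; rewrite jdot2; reflexivity).
  assert (Ef : f = s2 * (dot a3 e2 - /(m1+m2) * (m1 * dot a1 e2 + m2 * dot a2 e2))) by (subst f; rewrite jdot2; reflexivity).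
  assert (B1 : l2 = c*c + e*e).
  { rewrite El2, Ec, Ee. pose proof (jac_bil m1 m2 m3 _ _ _ _ _ _ H1 H2 H3 S Cx Cx) as J. subst s1 s2. match type of J with ?A = _ => transitivity A; [ring | rewrite J; ring] end. }
  assert (B2 : l1 = d*d + f*f).
  { rewrite El1, Ed, Ef. pose proof (jac_bil m1 m2 m3 _ _ _ _ _ _ H1 H2 H3 S Cy Cy) as J. subst s1 s2. match type of J with ?A = _ => transitivity A; [ring | rewrite J; ring] end. }
  assert (B3 : c*d + e*f = 0).
  { rewrite Ec, Ed, Ee, Ef. pose proof (jac_bil m1 m2 m3 _ _ _ _ _ _ H1 H2 H3 S Cx Cy) as J. subst s1 s2. match type of J with _ = ?B => transitivity B; [ring | rewrite <- J; rewrite <- Sxy; ring] end. }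
  assert (I0 : 0 <= I) by (rewrite EI, B1, B2; nra).
  repeat split; auto.
  - rewrite EX, EY, B1, B2. apply key2; auto.
  - rewrite EX, EY, EZ, EI, B1, B2. ring.
Qed.


Ltac jb J := match type of J with ?A = ?B => transitivity A; [ring|rewrite J] end.
Ltac jbB J := match type of J with ?A = ?B => transitivity B; [ring|rewrite <- J] end.

Lemma sph X Y Z I : 0 < X^2+Y^2 -> X^2+Y^2+Z^2 = I^2 -> 0 <= I ->
  0 < I /\ -1 <= Z/I <= 1 /\ sqrt (1 - (Z/I)²) = sqrt (X^2+Y^2) / I /\
  (I * (sqrt (X^2+Y^2) / I))^2 = X^2+Y^2.
Proof. intros D E I0.
  assert (Ipos : 0 < I).
  { destruct (Rle_lt_or_eq_dec 0 I I0) as [?|E0]; auto. subst I. nra. }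
  assert (ZZ : Z^2 <= I^2) by nra.
  assert (ZI : -1 <= Z/I <= 1).
  { assert (Z <= I) by nra. assert (-I <= Z) by nra.
    split; [apply (Rmult_le_reg_r I); [lra|] | apply (Rmult_le_reg_r I); [lra|]];
    unfold Rdiv; rewrite Rmult_assoc, Rinv_l; lra. }
  split; [auto|split; [auto|split]].
  - replace (1 - (Z/I)²) with ((sqrt (X^2+Y^2) / I)^2).
    + apply sqrt_pow2. unfold Rdiv; apply Rmult_le_pos; [apply sqrt_pos|apply Rlt_le, Rinv_0_lt_compat; lra].
    + unfold Rdiv. rewrite Rpow_mult_distr, pow2_sqrt by lra. unfold Rsqr.
      replace (X^2+Y^2) with (I^2 - Z^2) by lra. field. lra.
  - replace (I * (sqrt (X^2+Y^2) / I)) with (sqrt (X^2+Y^2)) by (field; lra).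
    apply pow2_sqrt. lra.
Qed.

Lemma sum3_zero a b c x y z : 0<a -> 0<b -> 0<c -> a*x^2+b*y^2+c*z^2 = 0 -> x = 0 /\ y = 0 /\ z = 0.
Proof. intros Ha Hb Hc H.
  assert (0 <= a*x^2) by (apply Rmult_le_pos; [lra|apply pow2_ge_0]).
  assert (0 <= b*y^2) by (apply Rmult_le_pos; [lra|apply pow2_ge_0]).
  assert (0 <= c*z^2) by (apply Rmult_le_pos; [lra|apply pow2_ge_0]).
  assert (a*x^2 = 0) by lra. assert (b*y^2 = 0) by lra. assert (c*z^2 = 0) by lra.
  assert (Q : forall k w, 0 < k -> k*w^2 = 0 -> w = 0).
  { intros k w Hk Hw. destruct (Rmult_integral _ _ Hw) as [?|H']; [lra|].
    apply Rsqr_0_uniq. unfold Rsqr. simpl in H'. lra. }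
  split; [apply (Q a)|split; [apply (Q b)|apply (Q c)]]; auto. Qed.

Lemma euler_alg m1 m2 m3 (a1 a2 a3 e1 e2 e3 A1 A2 A3 U1 U2 N Om : vec3) (th th1 : R) :
  0<m1 -> 0<m2 -> 0<m3 -> m1+m2+m3=1 -> frameP e1 e2 e3 ->
  dot e3 a1 = 0 -> dot e3 a2 = 0 -> dot e3 a3 = 0 ->
  vadd (vadd (vscale m1 a1) (vscale m2 a2)) (vscale m3 a3) = vzero ->
  m1 * (dot a1 e1 * dot a1 e2) + m2 * (dot a2 e1 * dot a2 e2) + m3 * (dot a3 e1 * dot a3 e2) = 0 ->
  nondegenerate a1 a2 a3 ->
  m1 * dot A1 e1 + m2 * dot A2 e1 + m3 * dot A3 e1 = 0 ->
  m1 * dot A1 e2 + m2 * dot A2 e2 + m3 * dot A3 e2 = 0 ->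
  dot U1 e1 = 0 -> dot U2 e2 = 0 -> dot N e3 = 0 ->
  dot U1 e2 + dot e1 U2 = 0 -> dot U1 e3 + dot e1 N = 0 -> dot U2 e3 + dot e2 N = 0 ->
  dot N a1 + dot e3 A1 = 0 -> dot N a2 + dot e3 A2 = 0 -> dot N a3 + dot e3 A3 = 0 ->
  m1 * ((dot A1 e1 + dot a1 U1) * dot a1 e2 + dot a1 e1 * (dot A1 e2 + dot a1 U2)) +
  m2 * ((dot A2 e1 + dot a2 U1) * dot a2 e2 + dot a2 e1 * (dot A2 e2 + dot a2 U2)) +
  m3 * ((dot A3 e1 + dot a3 U1) * dot a3 e2 + dot a3 e1 * (dot A3 e2 + dot a3 U2)) = 0 ->
  Om = vadd (vadd (vscale m1 (cross a1 A1)) (vscale m2 (cross a2 A2))) (vscale m3 (cross a3 A3)) ->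
  let I := moment m1 m2 m3 a1 a2 a3 in
  let X := shapeX m1 m2 m3 a1 a2 a3 e3 in
  let Y := shapeY m1 m2 m3 a1 a2 a3 e3 in
  let Z := shapeZ m1 m2 m3 a1 a2 a3 e3 in
  let phi := colatitude m1 m2 m3 a1 a2 a3 e3 in
  let J1 := jacobi1 m1 m2 m3 a1 a2 a3 in
  let J2 := jacobi2 m1 m2 m3 a1 a2 a3 in
  let J1' := jacobi1 m1 m2 m3 A1 A2 A3 in
  let J2' := jacobi2 m1 m2 m3 A1 A2 A3 in
  let dX := dot J1' J1 + dot J1 J1' - (dot J2' J2 + dot J2 J2') in
  let dY := 2 * (dot J1' J2 + dot J1 J2') in
  0 < X^2 + Y^2 ->
  X = I * sin phi * cos th -> Y = I * sin phi * sin th ->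
  dX * sin th + X * (cos th * th1) - (dY * cos th + Y * (- sin th * th1)) = 0 ->
  let l1 := inertia m1 m2 m3 a1 a2 a3 e1 e1 in
  let l2 := inertia m1 m2 m3 a1 a2 a3 e2 e2 in
  let l3 := inertia m1 m2 m3 a1 a2 a3 e3 e3 in
  let rho := size_rho m1 m2 m3 a1 a2 a3 in
  let G1 := dot Om e1 in let G2 := dot Om e2 in let G3 := dot Om e3 in
  (l3 = rho ^ 2 /\
   ((l1 = rho ^ 2 / 2 * (1 + sin phi) /\ l2 = rho ^ 2 / 2 * (1 - sin phi)) \/
    (l1 = rho ^ 2 / 2 * (1 - sin phi) /\ l2 = rho ^ 2 / 2 * (1 + sin phi)))) /\
  dot Om U1 = G2 * ((/ l3 - / l2) * G3 + / 2 * th1 * cos phi) /\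
  dot Om U2 = G1 * ((/ l1 - / l3) * G3 - / 2 * th1 * cos phi) /\
  dot Om N = G1 * G2 * (/ l2 - / l1).
Proof.
  intros H1 H2 H3 S F N1 N2 N3 C Sxy ND CP CQ U11 U22 NN U12 U13 U23 NA1 NA2 NA3 Sxy' Eom
    I X Y Z phi J1 J2 J1' J2' dX dY Dpos Xe Ye Ld l1 l2 l3 rho G1 G2 G3.
  pose proof (pw m1 m2 m3 a1 a2 a3 e1 e2 e3 H1 H2 H3 S F N1 N2 N3 C Sxy) as
    (El3 & EI & ED & EIZ & I0 & El1 & El2).
  fold l1 l2 l3 I X Y Z in El3, EI, ED, EIZ, I0, El1, El2.
  pose proof F as (F11&F22&F33&F12&F13&F23&Fc).
  set (x1 := dot a1 e1) in *. set (x2 := dot a2 e1) in *. set (x3 := dot a3 e1) in *.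
  set (y1 := dot a1 e2) in *. set (y2 := dot a2 e2) in *. set (y3 := dot a3 e2) in *.
  set (P1 := dot A1 e1) in *. set (P2 := dot A2 e1) in *. set (P3 := dot A3 e1) in *.
  set (Q1 := dot A1 e2) in *. set (Q2 := dot A2 e2) in *. set (Q3 := dot A3 e2) in *.
  set (al := dot U1 e3) in *. set (be := dot U2 e3) in *. set (ga := dot U1 e2) in *.
  assert (Ne1 : dot N e1 = - al) by (rewrite dot_comm; lra).
  assert (Ne2 : dot N e2 = - be) by (rewrite dot_comm; lra).
  assert (U2e1 : dot U2 e1 = - ga) by (rewrite dot_comm; lra).
  assert (An : forall a, dot e3 a = 0 -> dot a e3 = 0) by (intros; rewrite dot_comm; auto).
  assert (Ra : forall a A, dot e3 a = 0 -> dot N a + dot e3 A = 0 ->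
     dot A e3 = al * dot a e1 + be * dot a e2).
  { intros a A Na NA. rewrite (frame_dot e1 e2 e3 N a F), Ne1, Ne2, NN in NA.
    rewrite (dot_comm A e3). lra. }
  assert (R1 := Ra a1 A1 N1 NA1). assert (R2 := Ra a2 A2 N2 NA2). assert (R3 := Ra a3 A3 N3 NA3).
  fold x1 x2 x3 y1 y2 y3 in R1, R2, R3.
  assert (aU1 : forall a, dot e3 a = 0 -> dot a U1 = dot a e2 * ga).
  { intros a Na. rewrite (frame_dot e1 e2 e3 a U1 F), U11, (An a Na). unfold ga. ring. }
  assert (aU2 : forall a, dot e3 a = 0 -> dot a U2 = - dot a e1 * ga).
  { intros a Na. rewrite (frame_dot e1 e2 e3 a U2 F), U2e1, U22, (An a Na). unfold ga. ring. }
  rewrite (aU1 a1 N1), (aU1 a2 N2), (aU1 a3 N3), (aU2 a1 N1), (aU2 a2 N2), (aU2 a3 N3) in Sxy'.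
  fold x1 x2 x3 y1 y2 y3 in Sxy'.
  assert (EG1 : G1 = m1 * (y1 * dot A1 e3) + m2 * (y2 * dot A2 e3) + m3 * (y3 * dot A3 e3)).
  { subst G1. rewrite Eom, !dot_vadd_l, !dot_vscale_l, !(frame_cross1 e1 e2 e3 _ _ F), (An a1 N1), (An a2 N2), (An a3 N3). unfold x1, x2, x3, y1, y2, y3, P1, P2, P3, Q1, Q2, Q3, al, be, ga; ring. }
  assert (EG2 : G2 = - (m1 * (x1 * dot A1 e3) + m2 * (x2 * dot A2 e3) + m3 * (x3 * dot A3 e3))).
  { subst G2. rewrite Eom, !dot_vadd_l, !dot_vscale_l, !(frame_cross2 e1 e2 e3 _ _ F), (An a1 N1), (An a2 N2), (An a3 N3). unfold x1, x2, x3, y1, y2, y3, P1, P2, P3, Q1, Q2, Q3, al, be, ga; ring. }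
  assert (EG3 : G3 = m1 * (x1 * Q1 - y1 * P1) + m2 * (x2 * Q2 - y2 * P2) + m3 * (x3 * Q3 - y3 * P3)).
  { subst G3. rewrite Eom, !dot_vadd_l, !dot_vscale_l, !(frame_cross3 e1 e2 e3 _ _ F). unfold x1, x2, x3, y1, y2, y3, P1, P2, P3, Q1, Q2, Q3, al, be, ga; ring. }
  rewrite R1, R2, R3 in EG1, EG2.
  assert (DO1 : dot Om U1 = G2 * ga + G3 * al).
  { rewrite (frame_dot e1 e2 e3 Om U1 F), U11. subst G2 G3. unfold x1, x2, x3, y1, y2, y3, P1, P2, P3, Q1, Q2, Q3, al, be, ga; ring. }
  assert (DO2 : dot Om U2 = - G1 * ga + G3 * be).
  { rewrite (frame_dot e1 e2 e3 Om U2 F), U2e1, U22. subst G1 G3. unfold x1, x2, x3, y1, y2, y3, P1, P2, P3, Q1, Q2, Q3, al, be, ga; ring. }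
  assert (DO3 : dot Om N = - G1 * al - G2 * be).
  { rewrite (frame_dot e1 e2 e3 Om N F), Ne1, Ne2, NN. subst G1 G2. unfold x1, x2, x3, y1, y2, y3, P1, P2, P3, Q1, Q2, Q3, al, be, ga; ring. }
  assert (G1b : G1 = be * l1).
  { rewrite EG1, El1. transitivity (al * (m1 * (x1 * y1) + m2 * (x2 * y2) + m3 * (x3 * y3)) + be * (m1 * y1 ^ 2 + m2 * y2 ^ 2 + m3 * y3 ^ 2)); [ring|]. rewrite Sxy. ring. }
  assert (G2a : G2 = - al * l2).
  { rewrite EG2, El2. transitivity (- be * (m1 * (x1 * y1) + m2 * (x2 * y2) + m3 * (x3 * y3)) - al * (m1 * x1 ^ 2 + m2 * x2 ^ 2 + m3 * x3 ^ 2)); [ring|]. rewrite Sxy. ring. }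
  assert (CR : forall a b, dot e3 a = 0 -> dot e3 b = 0 -> cross a b <> vzero ->
     dot a e1 * dot b e2 - dot a e2 * dot b e1 <> 0).
  { intros a b Na Nb Hab Z0. apply Hab. apply (frame_zero e1 e2 e3); auto.
    - rewrite (frame_cross1 e1 e2 e3 _ _ F), (An a Na), (An b Nb). unfold x1, x2, x3, y1, y2, y3, P1, P2, P3, Q1, Q2, Q3, al, be, ga; ring.
    - rewrite (frame_cross2 e1 e2 e3 _ _ F), (An a Na), (An b Nb). unfold x1, x2, x3, y1, y2, y3, P1, P2, P3, Q1, Q2, Q3, al, be, ga; ring.
    - rewrite (frame_cross3 e1 e2 e3 _ _ F). exact Z0. }
  assert (l1pos : l1 <> 0 /\ l2 <> 0).
  { assert (Hx : l2 = 0 -> x1 = 0 /\ x2 = 0 /\ x3 = 0).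
    { intros Z0. rewrite El2 in Z0. apply sum3_zero with m1 m2 m3; auto. }
    assert (Hy : l1 = 0 -> y1 = 0 /\ y2 = 0 /\ y3 = 0).
    { intros Z0. rewrite El1 in Z0. apply sum3_zero with m1 m2 m3; auto. }
    destruct ND as [Nd|[Nd|Nd]];
    [pose proof (CR a1 a2 N1 N2 Nd) as K | pose proof (CR a2 a3 N2 N3 Nd) as K | pose proof (CR a1 a3 N1 N3 Nd) as K];
    fold x1 x2 x3 y1 y2 y3 in K; split; intro Z0;
    [destruct (Hy Z0) as (E1&E2&E3) | destruct (Hx Z0) as (E1&E2&E3) |destruct (Hy Z0) as (E1&E2&E3) | destruct (Hx Z0) as (E1&E2&E3) |destruct (Hy Z0) as (E1&E2&E3) | destruct (Hx Z0) as (E1&E2&E3)];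
    apply K; rewrite ?E1, ?E2, ?E3; ring. }
  destruct l1pos as [l1n l2n].
  set (c := dot J1 e1). set (d := dot J1 e2). set (e := dot J2 e1). set (f := dot J2 e2).
  set (c' := dot J1' e1). set (d' := dot J1' e2). set (e' := dot J2' e1). set (f' := dot J2' e2).
  assert (J1n : dot J1 e3 = 0).
  { subst J1. rewrite jdot1, (An a1 N1), (An a2 N2). unfold x1, x2, x3, y1, y2, y3, P1, P2, P3, Q1, Q2, Q3, al, be, ga; ring. }
  assert (J2n : dot J2 e3 = 0).
  { subst J2. rewrite jdot2, (An a1 N1), (An a2 N2), (An a3 N3). unfold x1, x2, x3, y1, y2, y3, P1, P2, P3, Q1, Q2, Q3, al, be, ga; ring. }
  assert (EX : X = c*c+d*d-e*e-f*f).
  { subst X; unfold shapeX. fold J1 J2. rewrite (frame_dot e1 e2 e3 J1 J1 F), (frame_dot e1 e2 e3 J2 J2 F), J1n, J2n. subst c d e f. unfold x1, x2, x3, y1, y2, y3, P1, P2, P3, Q1, Q2, Q3, al, be, ga; ring. }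
  assert (EY : Y = 2*(c*e+d*f)).
  { subst Y; unfold shapeY. fold J1 J2. rewrite (frame_dot e1 e2 e3 J1 J2 F), J1n, J2n. subst c d e f. unfold x1, x2, x3, y1, y2, y3, P1, P2, P3, Q1, Q2, Q3, al, be, ga; ring. }
  assert (EZ : Z = 2*(c*f-d*e)).
  { subst Z; unfold shapeZ. fold J1 J2. rewrite (frame_cross3 e1 e2 e3 _ _ F). subst c d e f. unfold x1, x2, x3, y1, y2, y3, P1, P2, P3, Q1, Q2, Q3, al, be, ga; ring. }
  assert (EdX : dX = 2*(c*c'+d*d'-e*e'-f*f')).
  { subst dX. rewrite (frame_dot e1 e2 e3 J1' J1 F), (frame_dot e1 e2 e3 J1 J1' F), (frame_dot e1 e2 e3 J2' J2 F), (frame_dot e1 e2 e3 J2 J2' F), J1n, J2n. subst c d e f c' d' e' f'. unfold x1, x2, x3, y1, y2, y3, P1, P2, P3, Q1, Q2, Q3, al, be, ga; ring. }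
  assert (EdY : dY = 2*(c'*e+c*e'+d'*f+d*f')).
  { subst dY. rewrite (frame_dot e1 e2 e3 J1' J2 F), (frame_dot e1 e2 e3 J1 J2' F), J1n, J2n. subst c d e f c' d' e' f'. unfold x1, x2, x3, y1, y2, y3, P1, P2, P3, Q1, Q2, Q3, al, be, ga; ring. }
  set (s1 := sqrt (m1*m2/(m1+m2))). set (s2 := sqrt (m3*(m1+m2))).
  assert (Ec : c = s1 * (x2 - x1)) by (subst c J1; rewrite jdot1; reflexivity).
  assert (Ed : d = s1 * (y2 - y1)) by (subst d J1; rewrite jdot1; reflexivity).
  assert (Ee : e = s2 * (x3 - /(m1+m2) * (m1 * x1 + m2 * x2))) by (subst e J2; rewrite jdot2; reflexivity).
  assert (Ef : f = s2 * (y3 - /(m1+m2) * (m1 * y1 + m2 * y2))) by (subst f J2; rewrite jdot2; reflexivity).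
  assert (Ec' : c' = s1 * (P2 - P1)) by (subst c' J1'; rewrite jdot1; reflexivity).
  assert (Ed' : d' = s1 * (Q2 - Q1)) by (subst d' J1'; rewrite jdot1; reflexivity).
  assert (Ee' : e' = s2 * (P3 - /(m1+m2) * (m1 * P1 + m2 * P2))) by (subst e' J2'; rewrite jdot2; reflexivity).
  assert (Ef' : f' = s2 * (Q3 - /(m1+m2) * (m1 * Q1 + m2 * Q2))) by (subst f' J2'; rewrite jdot2; reflexivity).
  assert (Cx := com_dot _ _ _ _ _ _ e1 C). assert (Cy := com_dot _ _ _ _ _ _ e2 C).
  fold x1 x2 x3 in Cx. fold y1 y2 y3 in Cy.
  assert (B1 : l2 = c*c + e*e).
  { rewrite El2, Ec, Ee. pose proof (jac_bil m1 m2 m3 _ _ _ _ _ _ H1 H2 H3 S Cx Cx) as J. fold s1 s2 in J. jb J. unfold x1, x2, x3, y1, y2, y3, P1, P2, P3, Q1, Q2, Q3, al, be, ga; ring. }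
  assert (B2 : l1 = d*d + f*f).
  { rewrite El1, Ed, Ef. pose proof (jac_bil m1 m2 m3 _ _ _ _ _ _ H1 H2 H3 S Cy Cy) as J. fold s1 s2 in J. jb J. unfold x1, x2, x3, y1, y2, y3, P1, P2, P3, Q1, Q2, Q3, al, be, ga; ring. }
  assert (B3 : c*d + e*f = 0).
  { rewrite Ec, Ed, Ee, Ef. pose proof (jac_bil m1 m2 m3 _ _ _ _ _ _ H1 H2 H3 S Cx Cy) as J. fold s1 s2 in J. jbB J. rewrite <- Sxy. unfold x1, x2, x3, y1, y2, y3, P1, P2, P3, Q1, Q2, Q3, al, be, ga; ring. }
  assert (BK : m1*(P1*y1 + x1*Q1) + m2*(P2*y2+x2*Q2) + m3*(P3*y3+x3*Q3) = c'*d + c*d' + e'*f + e*f').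
  { pose proof (jac_bil m1 m2 m3 _ _ _ _ _ _ H1 H2 H3 S CP Cy) as J. fold s1 s2 in J.
    pose proof (jac_bil m1 m2 m3 _ _ _ _ _ _ H1 H2 H3 S Cx CQ) as J'. fold s1 s2 in J'.
    rewrite Ec, Ed, Ee, Ef, Ec', Ed', Ee', Ef'.
    match type of J with _ = ?B => match type of J' with _ = ?B' => transitivity (B + B'); [|ring] end end.
    rewrite <- J, <- J'. unfold x1, x2, x3, y1, y2, y3, P1, P2, P3, Q1, Q2, Q3, al, be, ga; ring. }
  assert (BG3 : G3 = c*d' - d*c' + e*f' - f*e').
  { pose proof (jac_bil m1 m2 m3 _ _ _ _ _ _ H1 H2 H3 S CP Cy) as J. fold s1 s2 in J.
    pose proof (jac_bil m1 m2 m3 _ _ _ _ _ _ H1 H2 H3 S Cx CQ) as J'. fold s1 s2 in J'.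
    rewrite EG3, Ec, Ed, Ee, Ef, Ec', Ed', Ee', Ef'.
    match type of J with _ = ?B => match type of J' with _ = ?B' => transitivity (B' - B); [|ring] end end.
    rewrite <- J, <- J'. unfold x1, x2, x3, y1, y2, y3, P1, P2, P3, Q1, Q2, Q3, al, be, ga; ring. }
  assert (GK : ga * (l2 - l1) = c'*d + c*d' + e'*f + e*f').
  { rewrite <- BK, El1, El2. apply Rminus_diag_uniq.
    match type of Sxy' with ?L = 0 => transitivity (- L); [unfold x1, x2, x3, y1, y2, y3, P1, P2, P3, Q1, Q2, Q3, al, be, ga; ring | rewrite Sxy'; ring] end. }
  destruct (sph X Y Z I Dpos EIZ I0) as (Ipos & ZI & SQ & RR).
  assert (Cphi : cos phi = Z / I) by (subst phi; unfold colatitude; apply cos_acos; auto).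
  assert (Sphi : sin phi = sqrt (X^2+Y^2) / I).
  { subst phi; unfold colatitude. fold Z I. rewrite sin_acos by auto. exact SQ. }
  set (r := I * sin phi) in *.
  assert (r2 : r^2 = X^2+Y^2) by (subst r; rewrite Sphi; exact RR).
  assert (SC : sin th * sin th + cos th * cos th = 1) by (pose proof (sin2_cos2 th) as HH; unfold Rsqr in HH; lra).
  assert (Lr : r * th1 = dY * cos th - dX * sin th).
  { rewrite Xe, Ye in Ld.
    transitivity (r * th1 * (sin th * sin th + cos th * cos th)); [rewrite SC; ring|].
    apply Rminus_diag_uniq.
    match type of Ld with ?L = 0 => transitivity L; [ring|exact Ld] end. }
  assert (Th : th1 * (X^2+Y^2) = X*dY - Y*dX).
  { rewrite <- r2. transitivity (r * (r*th1)); [unfold x1, x2, x3, y1, y2, y3, P1, P2, P3, Q1, Q2, Q3, al, be, ga; ring|]. rewrite Lr, Xe, Ye. unfold x1, x2, x3, y1, y2, y3, P1, P2, P3, Q1, Q2, Q3, al, be, ga; ring. }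
  assert (GI : ga * I = G3 + /2 * Z * th1).
  { assert (KY' : (l2-l1)*(ga*(l2-l1))*I = (l2-l1)^2*G3 + /2*Z*(th1*(X^2+Y^2))).
    { rewrite GK, Th, EI, B1, B2, BG3, EZ, EX, EY, EdX, EdY.
      pose proof (key c d e f c' d' e' f' B3) as KY.
      match type of KY with ?L = ?R => transitivity L; [unfold x1, x2, x3, y1, y2, y3, P1, P2, P3, Q1, Q2, Q3, al, be, ga; ring | rewrite KY; unfold x1, x2, x3, y1, y2, y3, P1, P2, P3, Q1, Q2, Q3, al, be, ga; ring] end. }
    rewrite ED in KY'.
    assert (l2 - l1 <> 0) by (intro Z0; rewrite ED, Z0 in Dpos; lra).
    apply (Rmult_eq_reg_l ((l2-l1)^2)); [|apply pow_nonzero; auto].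
    transitivity ((l2-l1)*(ga*(l2-l1))*I); [unfold x1, x2, x3, y1, y2, y3, P1, P2, P3, Q1, Q2, Q3, al, be, ga; ring|]. rewrite KY'. unfold x1, x2, x3, y1, y2, y3, P1, P2, P3, Q1, Q2, Q3, al, be, ga; ring. }
  assert (In : I <> 0) by (apply Rgt_not_eq; exact Ipos).
  assert (Eal : al = - G2 / l2) by (rewrite G2a; field; exact l2n).
  assert (Ebe : be = G1 / l1) by (rewrite G1b; field; exact l1n).
  assert (Ega : ga = (G3 + /2 * Z * th1) / I) by (rewrite <- GI; field; exact In).
  split; [|split; [|split]].
  - assert (Rho : rho ^ 2 = I) by (subst rho; unfold size_rho; apply pow2_sqrt; auto).
    rewrite Rho, El3. split; auto.
    rewrite Sphi, ED.
    clear - EI In.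
    destruct (Rlt_or_le 0 (l2 - l1)) as [Hp|Hn].
    + rewrite sqrt_pow2 by lra. right. rewrite EI in *. split; field; exact In.
    + replace ((l2 - l1)^2) with ((l1-l2)^2) by ring. rewrite sqrt_pow2 by lra. left.
      rewrite EI in *. split; field; exact In.
  - rewrite DO1, Ega, Eal, El3, Cphi. field. split; auto.
  - rewrite DO2, Ega, Ebe, El3, Cphi. field. split; auto.
  - rewrite DO3, Eal, Ebe. field. split; auto.
Qed.


Lemma n_diff (p q nn : R -> vec3) t : vdifferentiable_at p t -> vdifferentiable_at q t ->
  vcontinuous_at nn t ->
  locally t (fun s => dot (nn s) (nn s) = 1 /\ dot (nn s) (p s) = 0 /\ dot (nn s) (q s) = 0) ->
  cross (p t) (q t) <> vzero -> vdifferentiable_at nn t.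
Proof.
  intros Dp Dq Cn L Nz.
  apply (L_norm (fun s => cross (p s) (q s)) nn t); auto.
  - apply (vis_vdiff _ _ _ (vis_cross _ _ _ _ _ (vdiff_vis _ _ Dp) (vdiff_vis _ _ Dq))).
  - eapply filter_imp; [|exact L]. intros s (H1&H2&H3). split; auto.
    rewrite cross_anti, bac_cab, H2, H3. destruct (p s), (q s); vsimpl; f_equal; ring.
Qed.

Definition Sop m1 m2 m3 (a1 a2 a3 v : vec3) : vec3 :=
  vadd (vadd (vscale (m1 * dot a1 v) a1) (vscale (m2 * dot a2 v) a2)) (vscale (m3 * dot a3 v) a3).

Lemma Sop_dot m1 m2 m3 a1 a2 a3 v w : dot (Sop m1 m2 m3 a1 a2 a3 v) w =
  m1 * dot a1 v * dot a1 w + m2 * dot a2 v * dot a2 w + m3 * dot a3 v * dot a3 w.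
Proof. unfold Sop. rewrite !dot_vadd_l, !dot_vscale_l. ring. Qed.

Lemma pw_evec m1 m2 m3 a1 a2 a3 e1 e2 e3 v L : frameP e1 e2 e3 ->
  dot e3 a1 = 0 -> dot e3 a2 = 0 -> dot e3 a3 = 0 ->
  m1 * (dot a1 e1 * dot a1 e2) + m2 * (dot a2 e1 * dot a2 e2) + m3 * (dot a3 e1 * dot a3 e2) = 0 ->
  L = m1 * dot a1 e2 ^ 2 + m2 * dot a2 e2 ^ 2 + m3 * dot a3 e2 ^ 2 ->
  cross (vsub (Sop m1 m2 m3 a1 a2 a3 v) (vscale L (vsub v (vscale (dot e3 v) e3)))) e1 = vzero
  /\ dot (vsub (Sop m1 m2 m3 a1 a2 a3 v) (vscale L (vsub v (vscale (dot e3 v) e3)))) e1 =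
     m1 * dot a1 v * dot a1 e1 + m2 * dot a2 v * dot a2 e1 + m3 * dot a3 v * dot a3 e1 - L * dot v e1.
Proof.
  intros F N1 N2 N3 Sxy EL.
  pose proof F as (F11&F22&F33&F12&F13&F23&Fc).
  set (w := vsub (Sop m1 m2 m3 a1 a2 a3 v) (vscale L (vsub v (vscale (dot e3 v) e3)))).
  assert (Av : forall a, dot e3 a = 0 -> dot a v = dot a e1 * dot v e1 + dot a e2 * dot v e2).
  { intros a Na. rewrite (frame_dot e1 e2 e3 a v F), (dot_comm a e3), Na. ring. }
  assert (W2 : dot w e2 = 0).
  { subst w. rewrite dot_vsub_l, Sop_dot, dot_vscale_l, dot_vsub_l, dot_vscale_l, (Av a1 N1), (Av a2 N2), (Av a3 N3), (dot_comm e3 e2), F23, EL.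
    match type of Sxy with ?S = 0 => transitivity (dot v e1 * S); [ring | rewrite Sxy; ring] end. }
  assert (W3 : dot w e3 = 0).
  { subst w. rewrite dot_vsub_l, Sop_dot, dot_vscale_l, dot_vsub_l, dot_vscale_l, F33, !(dot_comm _ e3), N1, N2, N3. ring. }
  split.
  - apply (frame_zero e1 e2 e3); auto.
    + rewrite (frame_cross1 e1 e2 e3 _ _ F), W2, W3. ring.
    + rewrite (frame_cross2 e1 e2 e3 _ _ F), W3, F11, F13. ring.
    + rewrite (frame_cross3 e1 e2 e3 _ _ F), W2, F11, F12. ring.
  - subst w. rewrite dot_vsub_l, Sop_dot, dot_vscale_l, dot_vsub_l, dot_vscale_l, (dot_comm e3 e1), F13. ring.
Qed.

Lemma cinertia m1 m2 m3 (a1 a2 a3 u v : R -> vec3) t :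
  vcontinuous_at a1 t -> vcontinuous_at a2 t -> vcontinuous_at a3 t ->
  vcontinuous_at u t -> vcontinuous_at v t ->
  continuous (fun s => inertia m1 m2 m3 (a1 s) (a2 s) (a3 s) (u s) (v s)) t.
Proof. intros. unfold inertia. repeat apply cRplus; apply cRmult; try apply cRconst;
  apply cdot; apply vccross; auto. Qed.

Lemma loc0 (f : R -> R) t c l : locally t (fun s => f s = c) -> is_derive f t l -> l = 0.
Proof. intros L D. assert (D' : is_derive (fun _ => c) t l).
  { eapply is_derive_ext_loc; [|exact D]. eapply filter_imp; [|exact L]. intros; auto. }
  apply is_derive_unique in D'. rewrite <- D'. apply is_derive_unique. apply dRconst. Qed.

Lemma long_deriv (X Y th : R -> R) t dX dY dth : is_derive X t dX -> is_derive Y t dY -> is_derive th t dth ->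
  is_derive (fun s => X s * sin (th s) - Y s * cos (th s)) t
   (dX * sin (th t) + X t * (cos (th t) * dth) - (dY * cos (th t) + Y t * (- sin (th t) * dth))).
Proof. intros HX HY HT. eapply is_derive_eq.
  apply dRminus; [apply dRmult; [exact HX|] | apply dRmult; [exact HY|]].
  - apply (is_derive_comp sin th); [apply is_derive_sin | exact HT].
  - apply (is_derive_comp cos th); [apply is_derive_cos | exact HT].
  - simpl. unfold scal; simpl. unfold mult; simpl. ring. Qed.

Lemma vis_J1 m1 m2 m3 a1 a2 a3 t A1 A2 A3 : vis_derive a1 t A1 -> vis_derive a2 t A2 -> vis_derive a3 t A3 ->
  vis_derive (fun s => jacobi1 m1 m2 m3 (a1 s) (a2 s) (a3 s)) t (jacobi1 m1 m2 m3 A1 A2 A3).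
Proof. intros. unfold jacobi1. apply vis_scale. apply vis_sub; auto. Qed.
Lemma vis_J2 m1 m2 m3 a1 a2 a3 t A1 A2 A3 : vis_derive a1 t A1 -> vis_derive a2 t A2 -> vis_derive a3 t A3 ->
  vis_derive (fun s => jacobi2 m1 m2 m3 (a1 s) (a2 s) (a3 s)) t (jacobi2 m1 m2 m3 A1 A2 A3).
Proof. intros. unfold jacobi2. apply vis_scale. apply vis_sub; auto. apply vis_scale.
  apply vis_add; apply vis_scale; auto. Qed.

Lemma dshapeX m1 m2 m3 (a1 a2 a3 nn : R -> vec3) t A1 A2 A3 :
  vis_derive a1 t A1 -> vis_derive a2 t A2 -> vis_derive a3 t A3 ->
  is_derive (fun s => shapeX m1 m2 m3 (a1 s) (a2 s) (a3 s) (nn s)) t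
   (dot (jacobi1 m1 m2 m3 A1 A2 A3) (jacobi1 m1 m2 m3 (a1 t) (a2 t) (a3 t)) +
    dot (jacobi1 m1 m2 m3 (a1 t) (a2 t) (a3 t)) (jacobi1 m1 m2 m3 A1 A2 A3) -
    (dot (jacobi2 m1 m2 m3 A1 A2 A3) (jacobi2 m1 m2 m3 (a1 t) (a2 t) (a3 t)) +
     dot (jacobi2 m1 m2 m3 (a1 t) (a2 t) (a3 t)) (jacobi2 m1 m2 m3 A1 A2 A3))).
Proof. intros V1 V2 V3. unfold shapeX.
  pose proof (vis_J1 m1 m2 m3 _ _ _ _ _ _ _ V1 V2 V3) as J1.
  pose proof (vis_J2 m1 m2 m3 _ _ _ _ _ _ _ V1 V2 V3) as J2.
  apply (dRminus (fun s => dot (jacobi1 m1 m2 m3 (a1 s) (a2 s) (a3 s)) (jacobi1 m1 m2 m3 (a1 s) (a2 s) (a3 s)))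
                 (fun s => dot (jacobi2 m1 m2 m3 (a1 s) (a2 s) (a3 s)) (jacobi2 m1 m2 m3 (a1 s) (a2 s) (a3 s))));
  apply dot_is_derive; auto. Qed.

Lemma dshapeY m1 m2 m3 (a1 a2 a3 nn : R -> vec3) t A1 A2 A3 :
  vis_derive a1 t A1 -> vis_derive a2 t A2 -> vis_derive a3 t A3 ->
  is_derive (fun s => shapeY m1 m2 m3 (a1 s) (a2 s) (a3 s) (nn s)) t
   (2 * (dot (jacobi1 m1 m2 m3 A1 A2 A3) (jacobi2 m1 m2 m3 (a1 t) (a2 t) (a3 t)) +
    dot (jacobi1 m1 m2 m3 (a1 t) (a2 t) (a3 t)) (jacobi2 m1 m2 m3 A1 A2 A3))).
Proof. intros V1 V2 V3. unfold shapeY.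
  pose proof (vis_J1 m1 m2 m3 _ _ _ _ _ _ _ V1 V2 V3) as J1.
  pose proof (vis_J2 m1 m2 m3 _ _ _ _ _ _ _ V1 V2 V3) as J2.
  apply (dRscal 2 (fun s => dot (jacobi1 m1 m2 m3 (a1 s) (a2 s) (a3 s)) (jacobi2 m1 m2 m3 (a1 s) (a2 s) (a3 s)))).
  apply dot_is_derive; auto. Qed.

Lemma dmoment m1 m2 m3 (a1 a2 a3 : R -> vec3) t A1 A2 A3 :
  vis_derive a1 t A1 -> vis_derive a2 t A2 -> vis_derive a3 t A3 ->
  ex_derive (fun s => moment m1 m2 m3 (a1 s) (a2 s) (a3 s)) t.
Proof. intros V1 V2 V3. unfold moment. eexists.
  apply dRplus; [apply dRplus|];
  [apply (dRscal m1 (fun s => dot (a1 s) (a1 s))) | apply (dRscal m2 (fun s => dot (a2 s) (a2 s))) | apply (dRscal m3 (fun s => dot (a3 s) (a3 s)))];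
  apply dot_is_derive; eauto. Qed.

Lemma vis_Sop m1 m2 m3 (a1 a2 a3 : R -> vec3) v t A1 A2 A3 :
  vis_derive a1 t A1 -> vis_derive a2 t A2 -> vis_derive a3 t A3 ->
  exists V, vis_derive (fun s => Sop m1 m2 m3 (a1 s) (a2 s) (a3 s) v) t V.
Proof. intros V1 V2 V3. unfold Sop. eexists.
  apply vis_add; [apply vis_add|];
  [apply (vis_scalef (fun s => m1 * dot (a1 s) v)) | apply (vis_scalef (fun s => m2 * dot (a2 s) v)) | apply (vis_scalef (fun s => m3 * dot (a3 s) v))]; eauto;
  [apply (dRscal m1 (fun s => dot (a1 s) v)) | apply (dRscal m2 (fun s => dot (a2 s) v)) | apply (dRscal m3 (fun s => dot (a3 s) v))];
  apply dot_is_derive; eauto; apply vis_const. Qed.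


Theorem theoremD :
  forall (m1 m2 m3 : R), 0 < m1 -> 0 < m2 -> 0 < m3 -> m1 + m2 + m3 = 1 ->
  forall (ta tb : R), ta < tb ->
  forall (a1 a2 a3 n u1 u2 : R -> vec3) (theta : R -> R) (Om : vec3),
  (* Gamma(t) = (X(t), n(t)) is a motion of nondegenerate oriented m-triangles *)
  (forall t, ta < t < tb ->
     oriented_mtriangle m1 m2 m3 (a1 t) (a2 t) (a3 t) (n t) /\
     nondegenerate (a1 t) (a2 t) (a3 t)) ->
  (* the motion is differentiable *)
  (forall t, ta < t < tb ->
     vdifferentiable_at a1 t /\ vdifferentiable_at a2 t /\ vdifferentiable_at a3 t) ->
  (* with constant angular momentum Om *)
  (forall t, ta < t < tb -> ang_mom m1 m2 m3 a1 a2 a3 t = Om) ->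
  (* F(t) = (u1(t), u2(t), n(t)) is a continuously varying moving eigenframe *)
  (forall t, ta < t < tb ->
     is_eigenframe m1 m2 m3 (a1 t) (a2 t) (a3 t) (u1 t) (u2 t) (n t)) ->
  (forall t, ta < t < tb ->
     vcontinuous_at u1 t /\ vcontinuous_at u2 t /\ vcontinuous_at n t) ->
  (* the moduli curve stays off the poles, where the longitude is defined *)
  (forall t, ta < t < tb ->
     0 < (shapeX m1 m2 m3 (a1 t) (a2 t) (a3 t) (n t)) ^ 2
         + (shapeY m1 m2 m3 (a1 t) (a2 t) (a3 t) (n t)) ^ 2) ->
  (* theta(t) is a differentiable longitude along the moduli curve *)
  (forall t, ta < t < tb -> ex_derive theta t /\ is_longitude_at m1 m2 m3 a1 a2 a3 n theta t) ->
  forall t, ta < t < tb ->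
  let g1 := fun s => dot Om (u1 s) in
  let g2 := fun s => dot Om (u2 s) in
  let g3 := fun s => dot Om (n s) in
  let l1 := inertia m1 m2 m3 (a1 t) (a2 t) (a3 t) (u1 t) (u1 t) in
  let l2 := inertia m1 m2 m3 (a1 t) (a2 t) (a3 t) (u2 t) (u2 t) in
  let l3 := inertia m1 m2 m3 (a1 t) (a2 t) (a3 t) (n t) (n t) in
  let rho := size_rho m1 m2 m3 (a1 t) (a2 t) (a3 t) in
  let phi := colatitude m1 m2 m3 (a1 t) (a2 t) (a3 t) (n t) in
  (* the eigenvalues depend only on the moduli curve (rho, phi, theta) *)
  (l3 = rho ^ 2 /\
   ((l1 = rho ^ 2 / 2 * (1 + sin phi) /\ l2 = rho ^ 2 / 2 * (1 - sin phi)) \/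
    (l1 = rho ^ 2 / 2 * (1 - sin phi) /\ l2 = rho ^ 2 / 2 * (1 + sin phi)))) /\
  (* the Euler-type equations *)
  is_derive g1 t (g2 t * ((/ l3 - / l2) * g3 t + / 2 * Derive theta t * cos phi)) /\
  is_derive g2 t (g1 t * ((/ l1 - / l3) * g3 t - / 2 * Derive theta t * cos phi)) /\
  is_derive g3 t (g1 t * g2 t * (/ l2 - / l1)).
Proof.
  intros m1 m2 m3 Hm1 Hm2 Hm3 Hsum ta tb Hab a1 a2 a3 n u1 u2 theta Om Htri Hdiff HOm Hfr Hcont Hpole Hlong t Ht.
  intros g1 g2 g3 l1 l2 l3 rho phi.
  pose proof (interval_loc ta tb t Ht) as Lt.
  assert (PF : forall s, ta < s < tb -> frameP (u1 s) (u2 s) (n s) /\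
     dot (n s) (a1 s) = 0 /\ dot (n s) (a2 s) = 0 /\ dot (n s) (a3 s) = 0 /\
     vadd (vadd (vscale m1 (a1 s)) (vscale m2 (a2 s))) (vscale m3 (a3 s)) = vzero /\
     m1 * (dot (a1 s) (u1 s) * dot (a1 s) (u2 s)) + m2 * (dot (a2 s) (u1 s) * dot (a2 s) (u2 s)) +
     m3 * (dot (a3 s) (u1 s) * dot (a3 s) (u2 s)) = 0).
  { intros s Hs. destruct (Htri s Hs) as [(C & Nn & N1 & N2 & N3) _].
    destruct (Hfr s Hs) as (F11&F22&F12&F1n&F2n&Fc&E1&E2&E3).
    assert (Fr : frameP (u1 s) (u2 s) (n s)) by (repeat split; auto).
    repeat split; auto.
    specialize (E1 (u2 s)). rewrite F12, Rmult_0_r, inertia_eq, F12 in E1.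
    match type of E1 with ?L = 0 => transitivity (- L); [|rewrite E1; ring] end.
    rewrite !(dot_comm (u1 s)), !(dot_comm (u2 s)). ring. }
  assert (PW : forall s, ta < s < tb ->
     let l1 := inertia m1 m2 m3 (a1 s) (a2 s) (a3 s) (u1 s) (u1 s) in
     let l2 := inertia m1 m2 m3 (a1 s) (a2 s) (a3 s) (u2 s) (u2 s) in
     let I := moment m1 m2 m3 (a1 s) (a2 s) (a3 s) in
     let X := shapeX m1 m2 m3 (a1 s) (a2 s) (a3 s) (n s) in
     let Y := shapeY m1 m2 m3 (a1 s) (a2 s) (a3 s) (n s) in
     I = l1 + l2 /\ X^2 + Y^2 = (l2 - l1)^2 /\
     l1 = m1 * dot (a1 s) (u2 s) ^ 2 + m2 * dot (a2 s) (u2 s) ^ 2 + m3 * dot (a3 s) (u2 s) ^ 2).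
  { intros s Hs. destruct (PF s Hs) as (Fr & N1 & N2 & N3 & C & Sxy).
    destruct (pw m1 m2 m3 _ _ _ _ _ _ Hm1 Hm2 Hm3 Hsum Fr N1 N2 N3 C Sxy) as (_&EI&ED&_&_&El1&_).
    simpl. auto. }
  destruct (Hdiff t Ht) as (Da1 & Da2 & Da3).
  assert (Ca1 := vdiff_cont _ _ Da1). assert (Ca2 := vdiff_cont _ _ Da2). assert (Ca3 := vdiff_cont _ _ Da3).
  set (A1 := vderiv a1 t). set (A2 := vderiv a2 t). set (A3 := vderiv a3 t).
  assert (V1 : vis_derive a1 t A1) by (apply vdiff_vis; auto).
  assert (V2 : vis_derive a2 t A2) by (apply vdiff_vis; auto).
  assert (V3 : vis_derive a3 t A3) by (apply vdiff_vis; auto).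
  destruct (Hcont t Ht) as (Cu1 & Cu2 & Cn).
  assert (Dn : vdifferentiable_at n t).
  { destruct (Htri t Ht) as [_ ND].
    assert (LN : forall p q : R -> vec3, (forall s, ta < s < tb -> dot (n s) (p s) = 0 /\ dot (n s) (q s) = 0) ->
       locally t (fun s => dot (n s) (n s) = 1 /\ dot (n s) (p s) = 0 /\ dot (n s) (q s) = 0)).
    { intros p q Hpq. eapply filter_imp; [|exact Lt]. intros s Hs.
      destruct (PF s Hs) as ((_&_&F33&_) & _). split; auto. }
    destruct ND as [Nd|[Nd|Nd]].
    - apply (n_diff a1 a2 n t); auto. apply LN. intros s Hs; destruct (PF s Hs) as (_&?&?&?&_); auto.
    - apply (n_diff a2 a3 n t); auto. apply LN. intros s Hs; destruct (PF s Hs) as (_&?&?&?&_); auto.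
    - apply (n_diff a1 a3 n t); auto. apply LN. intros s Hs; destruct (PF s Hs) as (_&?&?&?&_); auto. }
  set (N' := vderiv n t).
  assert (VN : vis_derive n t N') by (apply vdiff_vis; auto).
  set (lf1 := fun s => inertia m1 m2 m3 (a1 s) (a2 s) (a3 s) (u1 s) (u1 s)).
  set (lf2 := fun s => inertia m1 m2 m3 (a1 s) (a2 s) (a3 s) (u2 s) (u2 s)).
  set (Ms := fun s => moment m1 m2 m3 (a1 s) (a2 s) (a3 s)).
  set (Ds := fun s => shapeX m1 m2 m3 (a1 s) (a2 s) (a3 s) (n s) ^ 2 + shapeY m1 m2 m3 (a1 s) (a2 s) (a3 s) (n s) ^ 2).
  assert (Cdl : continuous (fun s => lf2 s - lf1 s) t).
  { apply cRminus; apply cinertia; auto. }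
  assert (Dt : Ds t = (lf2 t - lf1 t)^2) by (destruct (PW t Ht) as (_&ED&_); exact ED).
  assert (Dpos : 0 < Ds t) by (apply Hpole; auto).
  assert (Lsg : exists sg, (sg = 1 \/ sg = -1) /\
     locally t (fun s => lf1 s = / 2 * (Ms s - sg * sqrt (Ds s)))).
  { destruct (Rlt_or_le 0 (lf2 t - lf1 t)) as [Hp|Hn].
    - exists 1. split; auto.
      pose proof (cont_pos_loc _ t Cdl Hp) as Lp.
      eapply filter_imp; [|exact (filter_and _ _ Lt Lp)]. intros s [Hs Ps].
      destruct (PW s Hs) as (EI&ED&_). fold (Ms s) in EI. unfold Ds. rewrite ED.
      rewrite sqrt_pow2 by (apply Rlt_le; exact Ps). rewrite EI. unfold lf1, lf2. field.
    - assert (Hn' : lf2 t - lf1 t < 0).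
      { destruct Hn as [?|E0]; auto. rewrite E0 in Dt. rewrite Dt in Dpos. lra. }
      exists (-1). split; auto.
      pose proof (cont_neg_loc _ t Cdl Hn') as Lp.
      eapply filter_imp; [|exact (filter_and _ _ Lt Lp)]. intros s [Hs Ps].
      destruct (PW s Hs) as (EI&ED&_). fold (Ms s) in EI. unfold Ds. rewrite ED.
      cbv beta in Ps. unfold lf1, lf2 in *.
      match goal with |- context [sqrt ((?p - ?q)^2)] => replace ((p - q)^2) with ((q - p)^2) by ring end.
      rewrite sqrt_pow2 by (lra). rewrite EI. field. }
  destruct Lsg as (sg & Hsg & Lsg).
  set (v := u1 t).
  set (evec := fun s => vsub (Sop m1 m2 m3 (a1 s) (a2 s) (a3 s) v)
                  (vscale (/ 2 * (Ms s - sg * sqrt (Ds s))) (vsub v (vscale (dot (n s) v) (n s))))).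
  assert (Devec : vdifferentiable_at evec t).
  { destruct (vis_Sop m1 m2 m3 a1 a2 a3 v t A1 A2 A3 V1 V2 V3) as (VS & HS).
    assert (EM : ex_derive Ms t) by (apply (dmoment m1 m2 m3 a1 a2 a3 t A1 A2 A3); auto).
    assert (ED : ex_derive Ds t).
    { eexists. unfold Ds.
      apply (dRplus (fun s => shapeX m1 m2 m3 (a1 s) (a2 s) (a3 s) (n s) ^ 2) (fun s => shapeY m1 m2 m3 (a1 s) (a2 s) (a3 s) (n s) ^ 2)).
      - apply (is_derive_pow (fun s => shapeX m1 m2 m3 (a1 s) (a2 s) (a3 s) (n s)) 2).
        apply dshapeX; eauto.
      - apply (is_derive_pow (fun s => shapeY m1 m2 m3 (a1 s) (a2 s) (a3 s) (n s)) 2).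
        apply dshapeY; eauto. }
    assert (EL : ex_derive (fun s => / 2 * (Ms s - sg * sqrt (Ds s))) t).
    { destruct EM as (dM & HM). destruct ED as (dD & HD). eexists.
      apply (dRscal (/2) (fun s => Ms s - sg * sqrt (Ds s))).
      apply (dRminus Ms (fun s => sg * sqrt (Ds s))); [exact HM|].
      apply (dRscal sg (fun s => sqrt (Ds s))).
      apply (is_derive_sqrt Ds); [exact HD | exact Dpos]. }
    destruct EL as (dl & EL).
    assert (VE : exists V, vis_derive evec t V).
    { eexists. unfold evec.
    apply vis_sub; [exact HS|].
    apply (vis_scalef (fun s => / 2 * (Ms s - sg * sqrt (Ds s)))); [exact EL|].
    apply vis_sub; [apply vis_const|].
    apply (vis_scalef (fun s => dot (n s) v)); [|exact VN].
    eapply is_derive_eq; [apply dot_is_derive; [exact VN | apply vis_const]|reflexivity]. }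
    destruct VE as (VV & VE). exact (proj1 (vis_vdiff _ _ _ VE)). }
  assert (Du1 : vdifferentiable_at u1 t).
  { apply (L_norm evec u1 t Devec Cu1).
    - eapply filter_imp; [|exact (filter_and _ _ Lt Lsg)]. intros s [Hs Ls].
      destruct (PF s Hs) as (Fr & N1 & N2 & N3 & C & Sxy).
      destruct (PW s Hs) as (_ & _ & El1).
      pose proof Fr as (F11&_).
      split; auto.
      unfold evec. rewrite <- Ls.
      apply (pw_evec m1 m2 m3 _ _ _ _ _ _ v _ Fr N1 N2 N3 Sxy El1).
    - intro E0.
      destruct (PF t Ht) as (Fr & N1 & N2 & N3 & C & Sxy).
      destruct (PW t Ht) as (_ & _ & El1).
      pose proof Fr as (F11&F22&F33&F12&F13&F23&Fc).
      apply locally_singleton in Lsg. fold (evec t) in E0.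
      unfold evec in E0. rewrite <- Lsg in E0.
      destruct (pw_evec m1 m2 m3 _ _ _ _ _ _ v _ Fr N1 N2 N3 Sxy El1) as [_ Ed].
      unfold lf1 in E0; cbv beta in E0. rewrite E0, dot_vzero_l in Ed.
      assert (El2 : lf2 t = m1 * dot (a1 t) v ^ 2 + m2 * dot (a2 t) v ^ 2 + m3 * dot (a3 t) v ^ 2).
      { unfold lf2. rewrite inertia_eq, F22.
        rewrite (frame_dot (u1 t) (u2 t) (n t) (a1 t) (a1 t) Fr), (frame_dot (u1 t) (u2 t) (n t) (a2 t) (a2 t) Fr), (frame_dot (u1 t) (u2 t) (n t) (a3 t) (a3 t) Fr).
        rewrite !(dot_comm _ (n t)), N1, N2, N3, !(dot_comm (u2 t)). subst v. ring. }
      subst v. rewrite F11 in Ed. fold (lf1 t) in Ed.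
      assert (lf2 t - lf1 t = 0).
      { rewrite El2. unfold lf1 in *; cbv beta in *. match type of Ed with 0 = ?E => transitivity E; [ring|symmetry; exact Ed] end. }
      rewrite Dt, H in Dpos. lra. }
  set (U1' := vderiv u1 t).
  assert (VU1 : vis_derive u1 t U1') by (apply vdiff_vis; auto).
  assert (Du2 : vdifferentiable_at u2 t).
  { assert (Lu2 : locally t (fun s => cross (n s) (u1 s) = u2 s)).
    { eapply filter_imp; [|exact Lt]. intros s Hs. destruct (PF s Hs) as (Fr & _).
      apply (frame_cross31 _ _ _ Fr). }
    pose proof (vis_ext_loc _ _ _ _ Lu2 (vis_cross _ _ _ _ _ VN VU1)) as VV.
    exact (proj1 (vis_vdiff _ _ _ VV)). }
  set (U2' := vderiv u2 t).
  assert (VU2 : vis_derive u2 t U2') by (apply vdiff_vis; auto).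
  destruct (Hlong t Ht) as (Eth & Lon).
  set (th1 := Derive theta t).
  assert (HT : is_derive theta t th1) by (apply Derive_correct; auto).
  assert (LP : forall P : R -> Prop, (forall s, ta < s < tb -> P s) -> locally t P).
  { intros P HP. eapply filter_imp; [|exact Lt]. exact HP. }
  destruct (PF t Ht) as (Fr & N1 & N2 & N3 & C & Sxy).
  pose proof Fr as (F11&F22&F33&F12&F13&F23&Fc).
  assert (DD : forall (p q : R -> vec3) P Q c, vis_derive p t P -> vis_derive q t Q ->
     (forall s, ta < s < tb -> dot (p s) (q s) = c) -> dot P (q t) + dot (p t) Q = 0).
  { intros p q P Q c Vp Vq Hc. apply (loc0 (fun s => dot (p s) (q s)) t c).
    apply LP; auto. apply dot_is_derive; auto. }
  assert (U11 : dot U1' (u1 t) = 0).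
  { pose proof (DD u1 u1 U1' U1' 1 VU1 VU1) as K.
    rewrite (dot_comm (u1 t)) in K. assert (K' : dot U1' (u1 t) + dot U1' (u1 t) = 0).
    { apply K. intros s Hs. destruct (PF s Hs) as ((?&_) & _). auto. }
    lra. }
  assert (U22 : dot U2' (u2 t) = 0).
  { pose proof (DD u2 u2 U2' U2' 1 VU2 VU2) as K.
    rewrite (dot_comm (u2 t)) in K. assert (K' : dot U2' (u2 t) + dot U2' (u2 t) = 0).
    { apply K. intros s Hs. destruct (PF s Hs) as ((?&?&_) & _). auto. }
    lra. }
  assert (NN : dot N' (n t) = 0).
  { pose proof (DD n n N' N' 1 VN VN) as K.
    rewrite (dot_comm (n t)) in K. assert (K' : dot N' (n t) + dot N' (n t) = 0).
    { apply K. intros s Hs. destruct (PF s Hs) as ((?&?&?&_) & _). auto. }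
    lra. }
  assert (U12 : dot U1' (u2 t) + dot (u1 t) U2' = 0).
  { apply (DD u1 u2 U1' U2' 0 VU1 VU2). intros s Hs. destruct (PF s Hs) as ((?&?&?&?&_) & _). auto. }
  assert (U13 : dot U1' (n t) + dot (u1 t) N' = 0).
  { apply (DD u1 n U1' N' 0 VU1 VN). intros s Hs. destruct (PF s Hs) as ((?&?&?&?&?&_) & _). auto. }
  assert (U23 : dot U2' (n t) + dot (u2 t) N' = 0).
  { apply (DD u2 n U2' N' 0 VU2 VN). intros s Hs. destruct (PF s Hs) as ((?&?&?&?&?&?&_) & _). auto. }
  assert (NA1 : dot N' (a1 t) + dot (n t) A1 = 0).
  { apply (DD n a1 N' A1 0 VN V1). intros s Hs. destruct (PF s Hs) as (_&?&_). auto. }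
  assert (NA2 : dot N' (a2 t) + dot (n t) A2 = 0).
  { apply (DD n a2 N' A2 0 VN V2). intros s Hs. destruct (PF s Hs) as (_&_&?&_). auto. }
  assert (NA3 : dot N' (a3 t) + dot (n t) A3 = 0).
  { apply (DD n a3 N' A3 0 VN V3). intros s Hs. destruct (PF s Hs) as (_&_&_&?&_). auto. }
  assert (CW : forall w, m1 * dot A1 w + m2 * dot A2 w + m3 * dot A3 w = 0).
  { intros w.
    assert (K : is_derive (fun s => m1 * dot (a1 s) w + m2 * dot (a2 s) w + m3 * dot (a3 s) w) t
       (m1 * (dot A1 w + dot (a1 t) vzero) + m2 * (dot A2 w + dot (a2 t) vzero) + m3 * (dot A3 w + dot (a3 t) vzero))).
    { apply dRplus; [apply dRplus|];
      [apply (dRscal m1 (fun s => dot (a1 s) w)) | apply (dRscal m2 (fun s => dot (a2 s) w)) | apply (dRscal m3 (fun s => dot (a3 s) w))];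
      apply dot_is_derive; auto; apply vis_const. }
    apply loc0 with (c := 0) in K.
    - rewrite !(dot_comm _ vzero), !dot_vzero_l in K. lra.
    - apply LP. intros s Hs. destruct (PF s Hs) as (_&_&_&_&Cs&_). apply com_dot; auto. }
  assert (Sxy' :
    m1 * ((dot A1 (u1 t) + dot (a1 t) U1') * dot (a1 t) (u2 t) + dot (a1 t) (u1 t) * (dot A1 (u2 t) + dot (a1 t) U2')) +
    m2 * ((dot A2 (u1 t) + dot (a2 t) U1') * dot (a2 t) (u2 t) + dot (a2 t) (u1 t) * (dot A2 (u2 t) + dot (a2 t) U2')) +
    m3 * ((dot A3 (u1 t) + dot (a3 t) U1') * dot (a3 t) (u2 t) + dot (a3 t) (u1 t) * (dot A3 (u2 t) + dot (a3 t) U2')) = 0).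
  { apply (loc0 (fun s => m1 * (dot (a1 s) (u1 s) * dot (a1 s) (u2 s)) + m2 * (dot (a2 s) (u1 s) * dot (a2 s) (u2 s)) +
     m3 * (dot (a3 s) (u1 s) * dot (a3 s) (u2 s))) t 0).
    - apply LP. intros s Hs. destruct (PF s Hs) as (_&_&_&_&_&?). auto.
    - apply dRplus; [apply dRplus|];
      [apply (dRscal m1 (fun s => dot (a1 s) (u1 s) * dot (a1 s) (u2 s))) | apply (dRscal m2 (fun s => dot (a2 s) (u1 s) * dot (a2 s) (u2 s))) | apply (dRscal m3 (fun s => dot (a3 s) (u1 s) * dot (a3 s) (u2 s)))];
      apply dRmult; apply dot_is_derive; auto. }
  assert (Eom : Om = vadd (vadd (vscale m1 (cross (a1 t) A1)) (vscale m2 (cross (a2 t) A2))) (vscale m3 (cross (a3 t) A3))).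
  { rewrite <- (HOm t Ht). reflexivity. }
  unfold is_longitude_at in Lon. cbv zeta in Lon. destruct Lon as (Xe & Ye).
  assert (Ld := long_deriv _ _ _ t _ _ _ (dshapeX m1 m2 m3 a1 a2 a3 n t A1 A2 A3 V1 V2 V3)
                 (dshapeY m1 m2 m3 a1 a2 a3 n t A1 A2 A3 V1 V2 V3) HT).
  apply loc0 with (c := 0) in Ld.
  2: { apply LP. intros s Hs. destruct (Hlong s Hs) as (_ & Ls). unfold is_longitude_at in Ls. cbv zeta in Ls.
       destruct Ls as (Xs & Ys). rewrite Xs, Ys. ring. }
  destruct (Htri t Ht) as [_ ND].
  pose proof (euler_alg m1 m2 m3 (a1 t) (a2 t) (a3 t) (u1 t) (u2 t) (n t) A1 A2 A3 U1' U2' N' Om (theta t) th1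
     Hm1 Hm2 Hm3 Hsum Fr N1 N2 N3 C Sxy ND (CW (u1 t)) (CW (u2 t)) U11 U22 NN U12 U13 U23 NA1 NA2 NA3 Sxy' Eom
     (Hpole t Ht) Xe Ye Ld) as EA.
  destruct EA as (Part1 & E1 & E2 & E3).
  assert (Dg : forall u U, vis_derive u t U -> is_derive (fun s => dot Om (u s)) t (dot Om U)).
  { intros u U VU. eapply is_derive_eq. apply dot_is_derive; [apply vis_const|exact VU].
    rewrite dot_vzero_l. apply Rplus_0_l. }
  split; [exact Part1|split; [|split]].
  - eapply is_derive_eq; [exact (Dg u1 U1' VU1)|]. exact E1.
  - eapply is_derive_eq; [exact (Dg u2 U2' VU2)|]. exact E2.
  - eapply is_derive_eq; [exact (Dg n N' VN)|]. exact E3.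
Qed.
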